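(* There exist $0<m_*\le M_*$ and $\alpha_*\in(0,1)$ such that for all $\alpha\in[\alpha_*,1)$ and all $n\ge1$, $$m_*(1-\alpha)\le j_{\nu_\alpha,n}-j_{-\nu_\alpha,n}\le M_*(1-\alpha),$$ where $\nu_\alpha=\frac{1-\alpha}{2-\alpha}$.
   Context: For real $\nu$, $J_\nu$ is the Bessel function of the first kind of order $\nu$ (given by $\sum_{k\ge0}\frac{(-1)^k}{k!\Gamma(k+\nu+1)}(y/2)^{2k+\nu}$) and $j_{\nu,n}$ denotes its $n$-th positive zero. *)

(* Defs.v *)
From Stdlib Require Import Reals List Arith.
From Coquelicot Require Import Coquelicot.
Open Scope R_scope.

(* Euler Gamma function, for x > 0:  Gamma x = \int_0^oo t^(x-1) e^(-t) dt
   (improper Riemann integral; only used at positive arguments). *)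
Definition Gamma (x : R) : R :=
  RInt_gen (fun t => Rpower t (x - 1) * exp (- t))
           (at_right 0) (Rbar_locally p_infty).

(* Bessel function of the first kind of real order nu, for y > 0:
   J_nu(y) = sum_{k>=0} (-1)^k / (k! Gamma(k+nu+1)) (y/2)^(2k+nu).
   (Used only for nu > -1, where all Gamma arguments are positive.) *)
Definition BesselJ (nu y : R) : R :=
  Series (fun k : nat =>
    (-1) ^ k / (INR (Factorial.fact k) * Gamma (INR k + nu + 1))
    * Rpower (y / 2) (2 * INR k + nu)).

Definition is_nth_pos_zero (nu : R) (n : nat) (j : R) : Prop :=
  0 < j /\ BesselJ nu j = 0 /\
  exists l : list R, NoDup l /\ length l = (n - 1)%nat /\
    (forall x, In x l <-> (0 < x < j /\ BesselJ nu x = 0)).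

Definition nu_alpha (alpha : R) : R := (1 - alpha) / (2 - alpha).

(* Main.v *)
Require Import Defs.
From Stdlib Require Import Reals List Arith Lra Lia.
From Coquelicot Require Import Coquelicot.
From Stdlib Require ClassicalEpsilon.
Open Scope R_scope.


Lemma deq (f : R -> R) (x l l' : R) : is_derive f x l -> l = l' -> is_derive f x l'.
Proof. intros H ->; auto. Qed.

Lemma dmult (f g : R -> R) (x df dg : R) : is_derive f x df -> is_derive g x dg ->
  is_derive (fun y => f y * g y) x (df * g x + f x * dg).
Proof. intros H H0. eapply deq. apply (is_derive_mult f g x df dg H H0). intros; apply Rmult_comm.
  simpl. unfold plus, mult; simpl. ring. Qed.

Lemma dplus (f g : R -> R) (x df dg : R) : is_derive f x df -> is_derive g x dg ->
  is_derive (fun y => f y + g y) x (df + dg).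
Proof. intros. apply (is_derive_plus f g); auto. Qed.

Lemma dminus (f g : R -> R) (x df dg : R) : is_derive f x df -> is_derive g x dg ->
  is_derive (fun y => f y - g y) x (df - dg).
Proof. intros. apply (is_derive_minus f g); auto. Qed.

Lemma dscal (c : R) (f : R -> R) (x df : R) : is_derive f x df -> is_derive (fun y => c * f y) x (c * df).
Proof. intros. apply (is_derive_scal f); auto. Qed.

Lemma dcomp (f g : R -> R) (x df dg : R) : is_derive g x dg -> is_derive f (g x) df ->
  is_derive (fun y => f (g y)) x (dg * df).
Proof. intros H H0. eapply deq. apply (is_derive_comp f g x df dg H0 H). simpl. unfold scal; simpl; unfold mult; simpl. ring. Qed.

Lemma dexp_neg x : is_derive (fun t => exp (- t)) x (- exp (- x)).
Proof. auto_derive; auto. ring. Qed.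

Lemma ballR (y : R) (eps : posreal) z : Rabs (z - y) < eps -> ball y eps z.
Proof. intros H. exact H. Qed.

Lemma is_derive_Rpower c t : 0 < t -> is_derive (fun t => Rpower t c) t (c * Rpower t (c-1)).
Proof. intros; apply is_derive_Reals, derivable_pt_lim_power; auto. Qed.

Lemma Rpower_pos a b : 0 < Rpower a b.
Proof. unfold Rpower; apply exp_pos. Qed.

Lemma Rpower_base1 x : Rpower 1 x = 1.
Proof. unfold Rpower; rewrite ln_1, Rmult_0_r, exp_0; auto. Qed.

Definition gi (x t : R) := Rpower t (x - 1) * exp (- t).

Lemma is_derive_gi x t : 0 < t -> is_derive (gi x) t
  ((x-1) * Rpower t (x-1-1) * exp (-t) - Rpower t (x-1) * exp (-t)).
Proof.
  intros Ht. unfold gi. eapply deq. apply dmult. apply is_derive_Rpower; auto.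
  apply dexp_neg. simpl. ring.
Qed.

Lemma gi_cont x t : 0 < t -> continuous (gi x) t.
Proof. intros. apply (ex_derive_continuous (gi x) t). eexists; apply is_derive_gi; auto. Qed.

Lemma gi_pos x t : 0 < gi x t.
Proof. unfold gi. apply Rmult_lt_0_compat. apply Rpower_pos. apply exp_pos. Qed.

Lemma derive_cont_pt (F : R -> R) x l : is_derive F x l -> continuity_pt F x.
Proof. intros H. apply continuity_pt_filterlim. apply (ex_derive_continuous F x). exists l; auto. Qed.

Lemma MVT_closed (F dF : R -> R) a b : a < b ->
  (forall x, a <= x <= b -> is_derive F x (dF x)) ->
  exists c, a <= c <= b /\ F b - F a = dF c * (b - a).
Proof.
  intros Hab HD. destruct (MVT_gen F a b dF) as [c [Hc Hc2]].
  - intros y Hy. apply HD. rewrite Rmin_left, Rmax_right in Hy; lra.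
  - intros y Hy. apply (derive_cont_pt F y (dF y)). apply HD.
    rewrite Rmin_left, Rmax_right in Hy; lra.
  - exists c. rewrite Rmin_left, Rmax_right in Hc by lra. split; auto.
Qed.

Lemma ex_RInt_gi x a b : 0 < a -> 0 < b -> ex_RInt (gi x) a b.
Proof.
  intros. apply (ex_RInt_continuous (V := R_CompleteNormedModule)). intros z Hz. apply gi_cont.
  assert (0 < Rmin a b) by (apply Rmin_glb_lt; auto). lra.
Qed.

Definition Phi (x s : R) := RInt (gi x) 1 s.

Lemma Phi_derive x s : 0 < s -> is_derive (Phi x) s (gi x s).
Proof.
  intros Hs. apply is_derive_RInt with (a := 1).
  - apply locally_interval with (a := Finite (s/2)) (b := p_infty); simpl; try lra.
    intros y Hy _. apply (RInt_correct (gi x)). apply ex_RInt_gi; lra.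
  - apply gi_cont; auto.
Qed.

Lemma Phi_1 x : Phi x 1 = 0.
Proof. unfold Phi. rewrite RInt_point. reflexivity. Qed.

Lemma Phi_incr x s t : 0 < s -> s < t -> Phi x s < Phi x t.
Proof.
  intros Hs Hst. destruct (MVT_closed (Phi x) (gi x) s t Hst) as [c [Hc E]].
  intros y Hy; apply Phi_derive; lra.
  assert (0 < gi x c * (t - s)) by (apply Rmult_lt_0_compat; [apply gi_pos|lra]). lra.
Qed.

Lemma lim_incr_pinfty (F : R -> R) B :
  (forall s t, 1 <= s <= t -> F s <= F t) -> (forall s, 1 <= s -> F s <= B) ->
  exists L, filterlim F (Rbar_locally p_infty) (locally L) /\ forall s, 1 <= s -> F s <= L.
Proof.
  intros Hm Hb.
  set (E := fun y => exists s, 1 <= s /\ y = F s).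
  destruct (completeness E) as [L [HL1 HL2]].
  - exists B. intros y [s [Hs ->]]. auto.
  - exists (F 1). exists 1. split; lra.
  - exists L. split.
    + apply filterlim_locally. intros eps.
      assert (exists s0, 1 <= s0 /\ L - eps < F s0) as [s0 [Hs0 Hs0']].
      { destruct (Classical_Prop.classic (exists s0, 1 <= s0 /\ L - eps < F s0)) as [H|H]; auto.
        exfalso. assert (L <= L - eps). apply HL2. intros y [s [Hs ->]].
        apply Rnot_lt_le. intro. apply H. exists s; auto.
        destruct eps; simpl in *; lra. }
      exists s0. intros s Hs. apply ballR.
      assert (F s0 <= F s) by (apply Hm; lra).
      assert (F s <= L) by (apply HL1; exists s; split; lra).
      apply Rabs_def1; lra.
    + intros s Hs. apply HL1. exists s; split; auto.
Qed.

Lemma lim_incr_0 (F : R -> R) B :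
  (forall s t, 0 < s <= t -> t <= 1 -> F s <= F t) -> (forall s, 0 < s <= 1 -> B <= F s) ->
  exists L, filterlim F (at_right 0) (locally L) /\ forall s, 0 < s <= 1 -> L <= F s.
Proof.
  intros Hm Hb.
  set (E := fun y => exists s, 0 < s <= 1 /\ y = - F s).
  destruct (completeness E) as [L [HL1 HL2]].
  - exists (- B). intros y [s [Hs ->]]. specialize (Hb s Hs). lra.
  - exists (- F 1). exists 1. split; lra.
  - exists (- L). split.
    + apply filterlim_locally. intros eps.
      assert (exists s0, 0 < s0 <= 1 /\ L - eps < - F s0) as [s0 [Hs0 Hs0']].
      { destruct (Classical_Prop.classic (exists s0, 0 < s0 <= 1 /\ L - eps < - F s0)) as [H|H]; auto.
        exfalso. assert (L <= L - eps). apply HL2. intros y [s [Hs ->]].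
        apply Rnot_lt_le. intro. apply H. exists s; auto.
        destruct eps; simpl in *; lra. }
      assert (Hp : 0 < s0) by lra.
      exists (mkposreal s0 Hp). intros s Hs1 Hs2. apply ballR.
      unfold ball in Hs1; simpl in Hs1; unfold AbsRing_ball, abs, minus, plus, opp in Hs1; simpl in Hs1.
      rewrite Ropp_0, Rplus_0_r in Hs1. apply Rabs_def2 in Hs1. destruct Hs1.
      assert (F s <= F s0) by (apply Hm; lra).
      assert (- F s <= L) by (apply HL1; exists s; split; [lra|auto]).
      apply Rabs_def1; lra.
    + intros s Hs. assert (- F s <= L) by (apply HL1; exists s; split; auto). lra.
Qed.

Lemma t_le_exp t : 0 <= t -> t <= exp (t / 2).
Proof.
  intros Ht. assert (H1 : 1 + t/4 <= exp (t/4)).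
  { destruct (Req_dec t 0) as [->|Hn]. replace (0/4) with 0 by field. rewrite exp_0; lra.
    left; apply exp_ineq1. lra. }
  replace (t/2) with (t/4 + t/4) by field. rewrite exp_plus.
  assert (0 <= 1 + t/4) by lra. assert (t <= (1+t/4)*(1+t/4)) by (pose proof (Rle_0_sqr (1 - t/4)); unfold Rsqr in *; nra).
  apply Rle_trans with ((1+t/4)*(1+t/4)); auto. apply Rmult_le_compat; lra.
Qed.

Lemma gi_le_exp x t : x <= 2 -> 1 <= t -> gi x t <= exp (- t / 2).
Proof.
  intros Hx Ht. unfold gi.
  assert (Rpower t (x-1) <= t).
  { rewrite <- (Rpower_1 t) at 2 by lra. apply Rle_Rpower; lra. }
  assert (t * exp (-t) <= exp (- t/2)).
  { replace (-t/2) with (t/2 + -t) by field. rewrite exp_plus.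
    apply Rmult_le_compat_r. left; apply exp_pos. apply t_le_exp; lra. }
  assert (0 < exp (-t)) by apply exp_pos. nra.
Qed.

Lemma is_RInt_expm2 a b : is_RInt (fun t => exp (- t / 2)) a b (-2 * exp (- b / 2) - (-2 * exp (- a /2))).
Proof.
  apply (is_RInt_derive (fun t => -2 * exp (- t / 2)) (fun t => exp (-t/2))).
  - intros y _. auto_derive; auto. change RinvImpl.Rinv with Rinv. unfold Rdiv; field.
  - intros y _. apply (ex_derive_continuous (fun t => exp (-t/2))). auto_derive; auto.
Qed.

Lemma exp_neg_le1 y : 0 <= y -> exp (- y / 2) <= 1.
Proof. intros. rewrite <- exp_0. destruct (Rle_dec (exp (-y/2)) (exp 0)); auto.
      exfalso. apply Rnot_le_lt in n. apply exp_lt_inv in n. lra. Qed.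

Lemma Phi_upper x s : 1/2 <= x <= 3/2 -> 1 <= s -> Phi x s <= 2.
Proof.
  intros Hx Hs. unfold Phi.
  apply Rle_trans with (RInt (fun t => exp (- t / 2)) 1 s).
  - apply RInt_le; auto. apply ex_RInt_gi; lra. eexists; apply is_RInt_expm2.
    intros y Hy. apply gi_le_exp; lra.
  - rewrite (is_RInt_unique _ _ _ _ (is_RInt_expm2 1 s)).
    assert (0 < exp (-s/2)) by apply exp_pos.
    pose proof (exp_neg_le1 1 ltac:(lra)). lra.
Qed.

Lemma is_RInt_pow x a b : 0 < x -> 0 < a -> 0 < b ->
  is_RInt (fun t => Rpower t (x - 1)) a b (Rpower b x / x - Rpower a x / x).
Proof.
  intros Hx Ha Hb.
  apply (is_RInt_derive (fun t => Rpower t x / x) (fun t => Rpower t (x-1))).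
  - intros y Hy. assert (0 < y). { assert (0 < Rmin a b) by (apply Rmin_glb_lt; auto). lra. }
    unfold Rdiv. eapply deq. apply (dmult (fun t => Rpower t x) (fun _ => / x)).
    apply is_derive_Rpower; auto. apply (is_derive_const (K := R_AbsRing)).
    simpl. unfold zero; simpl. field. lra.
  - intros y Hy. assert (0 < y). { assert (0 < Rmin a b) by (apply Rmin_glb_lt; auto). lra. }
    apply (ex_derive_continuous (fun t => Rpower t (x-1))). eexists; apply is_derive_Rpower; auto.
Qed.

Lemma Phi_lower x s : 1/2 <= x <= 3/2 -> 0 < s <= 1 -> -2 <= Phi x s.
Proof.
  intros Hx Hs. unfold Phi. rewrite <- opp_RInt_swap by (apply ex_RInt_gi; lra).
  assert (RInt (gi x) s 1 <= RInt (fun t => Rpower t (x - 1)) s 1).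
  { apply RInt_le. lra. apply ex_RInt_gi; lra. eexists; apply is_RInt_pow; lra.
    intros y Hy. unfold gi. assert (exp (-y) <= 1).
    { rewrite <- exp_0. destruct (Rle_dec (exp (-y)) (exp 0)); auto.
      exfalso. apply Rnot_le_lt in n. apply exp_lt_inv in n. lra. }
    assert (0 < Rpower y (x-1)) by apply Rpower_pos. nra. }
  rewrite (is_RInt_unique _ _ _ _ (is_RInt_pow x s 1 ltac:(lra) ltac:(lra) ltac:(lra))) in H.
  rewrite Rpower_base1 in H.
  assert (0 < Rpower s x / x). { apply Rdiv_lt_0_compat. apply Rpower_pos. lra. }
  assert (1 / x <= 2). { apply Rmult_le_reg_r with x. lra. unfold Rdiv. rewrite Rmult_assoc, Rinv_l by lra. lra. }
  change (opp (RInt (gi x) s 1)) with (- RInt (gi x) s 1). unfold Rdiv in *. lra.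
Qed.

Definition HasG x L0 L1 := filterlim (Phi x) (at_right 0) (locally L0) /\
  filterlim (Phi x) (Rbar_locally p_infty) (locally L1).

Lemma HasG_base x : 1/2 <= x <= 3/2 -> exists L0 L1, HasG x L0 L1 /\ L0 < L1.
Proof.
  intros Hx.
  destruct (lim_incr_pinfty (Phi x) 2) as [L1 [H1 H1']].
  { intros s t Hst. destruct (Req_dec s t) as [->|]. lra. left; apply Phi_incr; lra. }
  { intros; apply Phi_upper; lra. }
  destruct (lim_incr_0 (Phi x) (-2)) as [L0 [H0 H0']].
  { intros s t Hst _. destruct (Req_dec s t) as [->|]. lra. left; apply Phi_incr; lra. }
  { intros; apply Phi_lower; lra. }
  exists L0, L1. split. split; auto.
  pose proof (H0' 1 ltac:(lra)). pose proof (H1' 2 ltac:(lra)).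
  pose proof (Phi_incr x 1 2 ltac:(lra) ltac:(lra)). rewrite Phi_1 in *. lra.
Qed.

Lemma const_deriv0 (D : R -> R) a b : (forall y, 0 < y -> is_derive D y 0) -> 0 < a -> 0 < b -> D a = D b.
Proof.
  intros HD Ha Hb. destruct (Rtotal_order a b) as [H|[H|H]].
  - destruct (MVT_closed D (fun _ => 0) a b H) as [c [_ Hc]]. intros; apply HD; lra. lra.
  - subst; auto.
  - destruct (MVT_closed D (fun _ => 0) b a H) as [c [_ Hc]]. intros; apply HD; lra. lra.
Qed.

Lemma Phi_succ x s : 0 < s -> Phi (x+1) s = exp (-1) - Rpower s x * exp (-s) + x * Phi x s.
Proof.
  intros Hs.
  set (D := fun s => Phi (x+1) s - (exp (-1) - Rpower s x * exp (-s) + x * Phi x s)).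
  assert (D s = D 1).
  { apply const_deriv0; auto; try lra. intros y Hy. unfold D.
    eapply deq. apply dminus. apply Phi_derive; auto.
    apply dplus. apply dminus. apply (is_derive_const (K := R_AbsRing)).
    apply dmult. apply is_derive_Rpower; auto. apply dexp_neg.
    apply dscal. apply Phi_derive; auto.
    unfold gi. replace (x + 1 - 1) with x by ring. simpl. unfold zero; simpl. ring. }
  unfold D in H. rewrite !Phi_1, Rpower_base1 in H. replace (Ropp 1) with (-1) in H by ring. lra.
Qed.

Lemma lim0_pow x : 0 < x -> filterlim (fun s => Rpower s x * exp (-s)) (at_right 0) (locally 0).
Proof.
  intros Hx. apply filterlim_locally. intros eps.
  set (d := exp (ln eps / x)).
  assert (Hd : 0 < Rmin d 1). { apply Rmin_glb_lt. apply exp_pos. lra. }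
  exists (mkposreal _ Hd). intros s Hs1 Hs2. apply ballR.
  unfold ball in Hs1; simpl in Hs1; unfold AbsRing_ball, abs, minus, plus, opp in Hs1; simpl in Hs1.
  rewrite Ropp_0, Rplus_0_r, Rabs_right in Hs1 by lra.
  assert (s < d) by (pose proof (Rmin_l d 1); lra).
  assert (s < 1) by (pose proof (Rmin_r d 1); lra).
  rewrite Rminus_0_r, Rabs_right.
  2: { left; apply Rmult_lt_0_compat. apply Rpower_pos. apply exp_pos. }
  assert (exp (-s) <= 1). { pose proof (exp_neg_le1 (2*s) ltac:(lra)). replace (- (2*s)/2) with (-s) in H1 by field. auto. }
  assert (Rpower s x < eps).
  { unfold Rpower. assert (ln s < ln eps / x).
    { unfold d in H. rewrite <- (ln_exp (ln eps / x)). apply ln_increasing; auto. }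
    rewrite <- (exp_ln eps) by (destruct eps; auto).
    apply exp_increasing. apply Rmult_lt_reg_r with (/x). apply Rinv_0_lt_compat; auto.
    replace (x * ln s * / x) with (ln s) by (field; lra). auto. }
  assert (0 < Rpower s x) by apply Rpower_pos. nra.
Qed.

Lemma ln_lt_self y : 0 < y -> ln y < y.
Proof.
  intros Hy. destruct (Req_dec (ln y) 0) as [E|E]. rewrite E; auto.
  pose proof (exp_ineq1 (ln y) E). rewrite exp_ln in H; auto. lra.
Qed.

Lemma liminf_pow x : 0 < x -> filterlim (fun s => Rpower s x * exp (-s)) (Rbar_locally p_infty) (locally 0).
Proof.
  intros Hx. apply filterlim_locally. intros eps.
  set (A := 1 + Rabs (ln eps)).
  exists ((2*x + A) * (2*x+A)). intros s Hs. apply ballR.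
  assert (HA : 1 <= A) by (unfold A; pose proof (Rabs_pos (ln eps)); lra).
  assert (Hs0 : 0 < s) by nra.
  rewrite Rminus_0_r, Rabs_right.
  2: { left; apply Rmult_lt_0_compat. apply Rpower_pos. apply exp_pos. }
  unfold Rpower. rewrite <- exp_plus. rewrite <- (exp_ln eps) by (destruct eps; auto).
  apply exp_increasing.
  set (t := sqrt s).
  assert (Ht : t * t = s) by (apply sqrt_sqrt; lra).
  assert (Ht0 : 0 < t) by (apply sqrt_lt_R0; lra).
  assert (Hlt : 2*x + A < t).
  { unfold t. rewrite <- (sqrt_square (2*x+A)) by lra. apply sqrt_lt_1; nra. }
  assert (ln s = 2 * ln t) by (rewrite <- Ht, ln_mult; auto; ring).
  pose proof (ln_lt_self t Ht0).
  assert (x * ln s < 2 * x * t) by nra.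
  assert (- ln eps <= Rabs (ln eps)) by (rewrite <- Rabs_Ropp; apply Rle_abs).
  unfold A in *. nra.
Qed.

Lemma lim_lin (F : (R -> Prop) -> Prop) {FF : Filter F} (f g : R -> R) a b c k :
  filterlim f F (locally a) -> filterlim g F (locally b) ->
  filterlim (fun s => c - f s + k * g s) F (locally (c - a + k * b)).
Proof.
  intros Hf Hg. apply filterlim_locally. intros eps.
  assert (He : 0 < eps / (2 * (1 + Rabs k))).
  { apply Rdiv_lt_0_compat. destruct eps; auto. pose proof (Rabs_pos k); lra. }
  set (e := mkposreal _ He).
  apply filterlim_locally with (eps := e) in Hf.
  apply filterlim_locally with (eps := e) in Hg.
  generalize (filter_and _ _ Hf Hg). apply filter_imp. intros s [H1 H2].
  apply ballR. change (Rabs (f s - a) < e) in H1. change (Rabs (g s - b) < e) in H2.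
  simpl in H1, H2.
  replace (c - f s + k * g s - (c - a + k * b)) with (- (f s - a) + k * (g s - b)) by ring.
  eapply Rle_lt_trans. apply Rabs_triang. rewrite Rabs_Ropp, Rabs_mult.
  assert (Rabs k * Rabs (g s - b) <= Rabs k * (eps / (2 * (1 + Rabs k)))).
  { apply Rmult_le_compat_l. apply Rabs_pos. lra. }
  assert (Rabs k * (eps / (2 * (1 + Rabs k))) < eps / 2).
  { pose proof (Rabs_pos k). destruct eps as [ep Hep]; simpl in *.
    apply Rmult_lt_reg_r with (2 * (1 + Rabs k)). lra.
    field_simplify; try lra; try nra. }
  assert (eps / (2 * (1 + Rabs k)) <= eps / 2).
  { pose proof (Rabs_pos k). destruct eps as [ep Hep]; simpl in *.
    unfold Rdiv. apply Rmult_le_compat_l. lra. apply Rinv_le_contravar; lra. }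
  lra.
Qed.

Lemma HasG_succ x L0 L1 : 0 < x -> HasG x L0 L1 ->
  HasG (x+1) (exp (-1) - 0 + x * L0) (exp (-1) - 0 + x * L1).
Proof.
  intros Hx [H0 H1]. split.
  - eapply filterlim_ext_loc. 2: apply (lim_lin (at_right 0) (fun s => Rpower s x * exp (-s)) (Phi x)); [apply lim0_pow; auto | apply H0].
    exists (mkposreal 1 Rlt_0_1). intros y _ Hy. simpl. rewrite Phi_succ; auto.
  - eapply filterlim_ext_loc. 2: apply (lim_lin (Rbar_locally p_infty) (fun s => Rpower s x * exp (-s)) (Phi x)); [apply liminf_pow; auto | apply H1].
    exists 0. intros y Hy. simpl. rewrite Phi_succ; auto.
Qed.

Lemma Gamma_HasG x L0 L1 : 0 < x -> HasG x L0 L1 -> Gamma x = L1 - L0.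
Proof.
  intros Hx [H0 H1]. unfold Gamma. change (fun t => Rpower t (x - 1) * exp (- t)) with (gi x).
  apply is_RInt_gen_unique.
  apply (is_RInt_gen_ext (Derive (Phi x))).
  { apply Filter_prod with (fun a => 0 < a) (fun b => 0 < b).
    exists (mkposreal 1 Rlt_0_1). intros; auto. exists 0. intros; auto.
    intros a b Ha Hb y Hy. simpl in Hy. apply is_derive_unique. apply Phi_derive.
    assert (0 < Rmin a b) by (apply Rmin_glb_lt; auto). lra. }
  apply is_RInt_gen_Derive; auto.
  { apply Filter_prod with (fun a => 0 < a) (fun b => 0 < b).
    exists (mkposreal 1 Rlt_0_1). intros; auto. exists 0. intros; auto.
    intros a b Ha Hb y Hy. simpl in Hy. eexists. apply Phi_derive.
    assert (0 < Rmin a b) by (apply Rmin_glb_lt; auto). lra. }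
  { apply Filter_prod with (fun a => 0 < a) (fun b => 0 < b).
    exists (mkposreal 1 Rlt_0_1). intros; auto. exists 0. intros; auto.
    intros a b Ha Hb y Hy. simpl in Hy.
    assert (0 < y) by (assert (0 < Rmin a b) by (apply Rmin_glb_lt; auto); lra).
    apply continuous_ext_loc with (gi x).
    apply locally_interval with (a := Finite (y/2)) (b := p_infty); simpl; try lra.
    intros z Hz _. symmetry. apply is_derive_unique. apply Phi_derive. lra.
    apply gi_cont; auto. }
Qed.

Lemma Gamma_facts mu : -1/2 <= mu <= 1/2 ->
  0 < Gamma (mu + 1) /\ forall k, Gamma (INR (S k) + mu + 1) = (INR k + mu + 1) * Gamma (INR k + mu + 1).
Proof.
  intros Hmu.
  assert (Hall : forall k, exists L0 L1, HasG (INR k + mu + 1) L0 L1 /\ L0 < L1).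
  { induction k as [|k IH].
    - simpl. apply HasG_base. lra.
    - destruct IH as [L0 [L1 [HG HL]]]. pose proof (pos_INR k).
      exists (exp (-1) - 0 + (INR k + mu + 1) * L0), (exp (-1) - 0 + (INR k + mu + 1) * L1).
      split. replace (INR (S k) + mu + 1) with (INR k + mu + 1 + 1) by (rewrite S_INR; ring).
      apply HasG_succ; auto. lra.
      apply Rplus_lt_compat_l. apply Rmult_lt_compat_l; lra. }
  split.
  - destruct (Hall 0%nat) as [L0 [L1 [HG HL]]]. simpl in HG.
    replace (mu + 1) with (0 + mu + 1) by ring. rewrite (Gamma_HasG _ L0 L1); auto; lra.
  - intros k. destruct (Hall k) as [L0 [L1 [HG HL]]]. pose proof (pos_INR k).
    replace (INR (S k) + mu + 1) with (INR k + mu + 1 + 1) by (rewrite S_INR; ring).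
    rewrite (Gamma_HasG (INR k + mu + 1 + 1) _ _ ltac:(lra) (HasG_succ (INR k + mu + 1) L0 L1 ltac:(lra) HG)).
    rewrite (Gamma_HasG _ L0 L1); auto; try lra.
Qed.


Fixpoint bc (mu : R) (n : nat) : R :=
  match n with 0%nat => 1 | S m => - bc mu m / ((INR m + 1) * (INR m + 1 + mu)) end.

Definition Mu (mu : R) := -1/2 <= mu <= 1/2.

Lemma den_pos mu m : Mu mu -> 0 < (INR m + 1) * (INR m + 1 + mu).
Proof. intros [H1 H2]. pose proof (pos_INR m). apply Rmult_lt_0_compat; lra. Qed.

Lemma bc_nz mu n : Mu mu -> bc mu n <> 0.
Proof.
  intros Hm. induction n; simpl. lra.
  pose proof (den_pos mu n Hm). unfold Rdiv. intro E.
  apply Rmult_integral in E. destruct E as [E|E]. apply IHn; lra.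
  apply Rinv_neq_0_compat in E; auto; lra.
Qed.

Lemma bc_abs_S mu n : Mu mu -> Rabs (bc mu (S n)) = Rabs (bc mu n) / ((INR n + 1) * (INR n + 1 + mu)).
Proof.
  intros Hm. pose proof (den_pos mu n Hm). simpl.
  unfold Rdiv. rewrite Rabs_mult, Rabs_Ropp, Rabs_inv, (Rabs_right (_ * _)) by lra. auto.
Qed.

Lemma lim_2_over : is_lim_seq (fun n => 2 * / INR (S n)) 0.
Proof.
  replace (Finite 0) with (Rbar_mult 2 0) by (simpl; f_equal; ring).
  apply is_lim_seq_scal_l.
  apply (is_lim_seq_incr_1 (fun n => / INR n)).
  replace (Finite 0) with (Rbar_inv p_infty) by reflexivity.
  apply is_lim_seq_inv. apply is_lim_seq_INR. discriminate.
Qed.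

Lemma bc_radius mu : Mu mu -> CV_radius (bc mu) = p_infty.
Proof.
  intros Hm. apply CV_radius_infinite_DAlembert. intros; apply bc_nz; auto.
  apply is_lim_seq_le_le with (fun _ => 0) (fun n => 2 * / INR (S n)).
  - intros n. pose proof (den_pos mu n Hm). pose proof (bc_nz mu n Hm).
    unfold Rdiv. rewrite Rabs_mult, Rabs_inv, bc_abs_S by auto. split.
    + apply Rmult_le_pos. apply Rmult_le_pos. apply Rabs_pos. left; apply Rinv_0_lt_compat; auto.
      left; apply Rinv_0_lt_compat. apply Rabs_pos_lt; auto.
    + assert (Rabs (bc mu n) > 0) by (apply Rabs_pos_lt; auto).
      rewrite S_INR. destruct Hm. pose proof (pos_INR n).
      replace (Rabs (bc mu n) / ((INR n + 1) * (INR n + 1 + mu)) * / Rabs (bc mu n))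
        with (/ ((INR n + 1) * (INR n + 1 + mu))) by (field; lra).
      replace (2 * / (INR n + 1)) with (/ ((INR n + 1) * (1/2))) by (field; lra).
      apply Rinv_le_contravar. nra. apply Rmult_le_compat_l; lra.
  - apply is_lim_seq_const.
  - apply lim_2_over.
Qed.

Definition f0 mu z := PSeries (bc mu) z.
Definition f1 mu z := PSeries (PS_derive (bc mu)) z.
Definition f2 mu z := PSeries (PS_derive (PS_derive (bc mu))) z.

Lemma rad1 mu : Mu mu -> CV_radius (PS_derive (bc mu)) = p_infty.
Proof. intros; rewrite CV_radius_derive; apply bc_radius; auto. Qed.
Lemma rad2 mu : Mu mu -> CV_radius (PS_derive (PS_derive (bc mu))) = p_infty.
Proof. intros; rewrite !CV_radius_derive; apply bc_radius; auto. Qed.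

Lemma d_f0 mu z : Mu mu -> is_derive (f0 mu) z (f1 mu z).
Proof. intros. apply is_derive_PSeries. rewrite bc_radius; simpl; auto. Qed.
Lemma d_f1 mu z : Mu mu -> is_derive (f1 mu) z (f2 mu z).
Proof. intros. apply is_derive_PSeries. rewrite rad1; simpl; auto. Qed.

Lemma bc_S mu n : bc mu (S n) = - bc mu n / ((INR n + 1) * (INR n + 1 + mu)).
Proof. reflexivity. Qed.

Lemma f_ode mu z : Mu mu -> z * f2 mu z + (mu + 1) * f1 mu z + f0 mu z = 0.
Proof.
  intros Hm. unfold f0, f1, f2.
  rewrite <- PSeries_incr_1, <- PSeries_scal.
  rewrite <- PSeries_plus.
  2: { apply (ex_pseries_incr_1 (PS_derive (PS_derive (bc mu)))). apply CV_radius_inside; rewrite rad2; simpl; auto. }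
  2: { apply CV_radius_inside. rewrite CV_radius_scal. rewrite rad1; simpl; auto. auto. destruct Hm; lra. }
  rewrite <- PSeries_plus.
  2: { apply ex_pseries_plus. apply (ex_pseries_incr_1 (PS_derive (PS_derive (bc mu)))). apply CV_radius_inside; rewrite rad2; simpl; auto.
       apply CV_radius_inside. rewrite CV_radius_scal. rewrite rad1; simpl; auto. destruct Hm; lra. }
  2: { apply CV_radius_inside. rewrite bc_radius; simpl; auto. }
  rewrite (PSeries_ext _ (fun _ => 0)).
  { unfold PSeries. rewrite (Series_ext _ (fun n => 0 * 0)). rewrite (Series_scal_l 0 (fun _ => 0)). ring.
    intros; ring. }
  intros n. destruct n as [|m].
  - unfold PS_plus, PS_incr_1, PS_scal, PS_derive. simpl. unfold plus, zero, scal, mult; simpl.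
    change RinvImpl.Rinv with Rinv. change mult with Rmult. field. destruct Hm; lra.
  - unfold PS_plus, PS_incr_1, PS_scal, PS_derive. cbn -[INR bc Rdiv].
    pose proof (den_pos mu (S m) Hm). rewrite (bc_S mu (S m)).
    set (B := bc mu (S m)). rewrite !S_INR in *. destruct Hm. pose proof (pos_INR m).
    field. split; lra.
Qed.

Lemma Gamma_pos_k mu k : Mu mu -> 0 < Gamma (INR k + mu + 1).
Proof.
  intros Hm. destruct (Gamma_facts mu Hm) as [H0 HS].
  induction k. simpl. replace (0 + mu + 1) with (mu + 1) by ring. auto.
  rewrite HS. apply Rmult_lt_0_compat; auto. destruct Hm. pose proof (pos_INR k). lra.
Qed.

Lemma coef_rel mu k : Mu mu ->
  (-1) ^ k / (INR (fact k) * Gamma (INR k + mu + 1)) = bc mu k / Gamma (mu + 1).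
Proof.
  intros Hm. destruct (Gamma_facts mu Hm) as [H0 HS].
  induction k.
  - simpl. replace (0 + mu + 1) with (mu + 1) by ring. field. lra.
  - rewrite HS. rewrite bc_S. pose proof (Gamma_pos_k mu k Hm).
    pose proof (den_pos mu k Hm). pose proof (INR_fact_lt_0 k).
    replace (INR (fact (S k))) with ((INR k + 1) * INR (fact k)) by (rewrite fact_simpl, mult_INR, S_INR; ring).
    replace ((-1) ^ S k) with (- (-1)^k) by (simpl; ring).
    replace (bc mu k) with ((-1) ^ k / (INR (fact k) * Gamma (INR k + mu + 1)) * Gamma (mu + 1)) by (rewrite IHk; field; lra).
    destruct Hm. pose proof (pos_INR k). field. repeat split; try lra.
Qed.

Lemma BesselJ_eq mu y : Mu mu -> 0 < y ->
  BesselJ mu y = Rpower (y/2) mu / Gamma (mu + 1) * f0 mu (y * y / 4).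
Proof.
  intros Hm Hy. unfold BesselJ, f0, PSeries.
  rewrite <- Series_scal_l. apply Series_ext. intros k.
  rewrite coef_rel by auto. rewrite Rpower_plus.
  replace (2 * INR k) with (INR (2 * k)) by (rewrite mult_INR; simpl; ring).
  rewrite Rpower_pow by lra. rewrite pow_mult.
  replace ((y/2)^2) with (y * y / 4) by (simpl; field). field.
  pose proof (Gamma_facts mu Hm). lra.
Qed.

Lemma series_ratio (a : nat -> R) r : 0 <= r < 1 ->
  (forall n, Rabs (a (S n)) <= r * Rabs (a n)) -> Rabs (Series a) <= Rabs (a 0%nat) / (1 - r).
Proof.
  intros Hr Ha.
  assert (Hb : forall n, Rabs (a n) <= Rabs (a 0%nat) * r ^ n).
  { induction n. simpl; lra. simpl. specialize (Ha n).
    apply Rle_trans with (r * Rabs (a n)); auto. 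
    replace (Rabs (a 0%nat) * (r * r ^ n)) with (r * (Rabs (a 0%nat) * r ^ n)) by ring.
    apply Rmult_le_compat_l; lra. }
  assert (Hg : ex_series (fun n => Rabs (a 0%nat) * r ^ n)).
  { apply (ex_series_scal_l (Rabs (a 0%nat)) (fun n => r ^ n)). apply ex_series_geom. rewrite Rabs_right; lra. }
  assert (Hex : ex_series (fun n => Rabs (a n))).
  { apply (ex_series_le (K := R_AbsRing) (V := R_CompleteNormedModule)) with (fun n => Rabs (a 0%nat) * r ^ n); auto.
    intros n. unfold norm; simpl. unfold abs; simpl. rewrite Rabs_Rabsolu. auto. }
  eapply Rle_trans. apply Series_Rabs; auto.
  eapply Rle_trans. apply Series_le with (b := fun n => Rabs (a 0%nat) * r ^ n); auto.
  intros n; split; auto. apply Rabs_pos.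
  rewrite Series_scal_l, Series_geom by (rewrite Rabs_right; lra). unfold Rdiv. lra.
Qed.

Definition Mu' (mu : R) := -1/10 <= mu <= 1/10.
Lemma Mu'_Mu mu : Mu' mu -> Mu mu.
Proof. unfold Mu', Mu; lra. Qed.

Lemma f0_bound mu z : Mu' mu -> 0 <= z <= 1/4 -> Rabs (f0 mu z - 1) <= z * (125/100).
Proof.
  intros Hm' Hz. pose proof (Mu'_Mu mu Hm') as Hm. unfold f0.
  rewrite PSeries_decr_1 by (apply CV_radius_inside; rewrite bc_radius; simpl; auto).
  simpl bc at 1. replace (1 + z * PSeries (PS_decr_1 (bc mu)) z - 1) with (z * PSeries (PS_decr_1 (bc mu)) z) by ring.
  rewrite Rabs_mult, Rabs_right by lra. apply Rmult_le_compat_l. lra.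
  unfold PSeries, PS_decr_1.
  eapply Rle_trans. apply series_ratio with (r := 1/10). lra.
  - intros n. rewrite !Rabs_mult, (bc_abs_S mu (S n)) by auto. simpl pow.
    rewrite Rabs_mult. pose proof (den_pos mu (S n) Hm).
    assert (Rabs z / ((INR (S n) + 1) * (INR (S n) + 1 + mu)) <= 1/10).
    { rewrite S_INR. pose proof (pos_INR n). destruct Hm'. rewrite Rabs_right by lra.
      apply Rmult_le_reg_r with ((INR n + 1 + 1) * (INR n + 1 + 1 + mu)). rewrite S_INR in H; auto.
      unfold Rdiv. rewrite Rmult_assoc, Rinv_l by (rewrite S_INR in H; lra). nra. }
    pose proof (Rabs_pos (bc mu (S n))). pose proof (Rabs_pos (z ^ n)).
    replace (Rabs (bc mu (S n)) / ((INR (S n) + 1) * (INR (S n) + 1 + mu)) * (Rabs z * Rabs (z ^ n)))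
      with ((Rabs z / ((INR (S n) + 1) * (INR (S n) + 1 + mu))) * (Rabs (bc mu (S n)) * Rabs (z ^ n))) by (field; pose proof (pos_INR (S n)); destruct Hm'; repeat split; lra).
    apply Rmult_le_compat_r; auto. apply Rmult_le_pos; auto.
  - simpl. rewrite Rmult_1_r. unfold Rdiv. rewrite Rabs_mult, Rabs_Ropp, Rabs_R1, Rabs_inv.
    destruct Hm'. rewrite Rabs_right by lra.
    replace (1 * / ((0 + 1) * (0 + 1 + mu)) * / (1 - 1 * / 10)) with (/ ((1 + mu) * (9/10))) by (field; lra).
    replace (125 * / 100) with (/ (8/10)) by field. apply Rinv_le_contravar; nra.
Qed.

Lemma f1_bound mu z : Mu' mu -> 0 <= z <= 1/4 -> Rabs (f1 mu z - bc mu 1) <= z * (66/100).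
Proof.
  intros Hm' Hz. pose proof (Mu'_Mu mu Hm') as Hm. unfold f1.
  rewrite PSeries_decr_1 by (apply CV_radius_inside; rewrite rad1; simpl; auto).
  replace (PS_derive (bc mu) 0%nat) with (bc mu 1) by (unfold PS_derive; simpl; ring).
  replace (bc mu 1 + z * PSeries (PS_decr_1 (PS_derive (bc mu))) z - bc mu 1)
    with (z * PSeries (PS_decr_1 (PS_derive (bc mu))) z) by ring.
  rewrite Rabs_mult, Rabs_right by lra. apply Rmult_le_compat_l. lra.
  unfold PSeries, PS_decr_1, PS_derive.
  eapply Rle_trans. apply series_ratio with (r := 1/10). lra.
  - intros n. rewrite (bc_S mu (S (S n))). simpl pow.
    set (B := bc mu (S (S n))). set (Z := z ^ n).
    rewrite !S_INR. pose proof (pos_INR n). destruct Hm'.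
    replace ((INR n + 1 + 1 + 1) * (- B / ((INR n + 1 + 1 + 1) * (INR n + 1 + 1 + 1 + mu))) * (z * Z))
      with ((INR n + 1 + 1) * B * Z * (- z / ((INR n + 1 + 1) * (INR n + 1 + 1 + 1 + mu)))) by (field; repeat split; lra).
    rewrite (Rabs_mult _ (- z / _)).
    rewrite Rmult_comm. apply Rmult_le_compat_r. apply Rabs_pos.
    unfold Rdiv. rewrite Rabs_mult, Rabs_Ropp, Rabs_inv, !Rabs_right by nra.
    apply Rmult_le_reg_r with ((INR n + 1 + 1) * (INR n + 1 + 1 + 1 + mu)). nra.
    rewrite Rmult_assoc, Rinv_l by nra. nra.
  - simpl. rewrite Rmult_1_r. unfold Rdiv.
    rewrite !Rmult_1_l, !Rplus_0_l, !Rmult_1_l.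
    destruct Hm'.
    replace ((1 + 1) * (- (- (1) * / (1 + mu)) * / ((1 + 1) * (1 + 1 + mu))))
      with (/ ((1 + mu) * (2 + mu))) by (field; lra).
    rewrite Rabs_right by (left; apply Rinv_0_lt_compat; nra).
    replace (/ ((1 + mu) * (2 + mu)) * / (1 - / 10)) with (/ ((1 + mu) * (2 + mu) * (9/10))) by (field; lra).
    replace (66 * / 100) with (/ (100/66)) by field. apply Rinv_le_contravar; nra.
Qed.


Definition U mu x := Rpower x (mu + 1/2) * f0 mu (x*x/4).
Definition U1 mu x := Rpower x (mu + 1/2) * ((mu + 1/2) / x * f0 mu (x*x/4) + x / 2 * f1 mu (x*x/4)).
Definition Q mu x := 1 + (1/4 - mu*mu) / (x*x).

Lemma Rpower_m1 x c : 0 < x -> Rpower x (c - 1) = Rpower x c / x.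
Proof. intros. unfold Rminus. rewrite Rpower_plus, Rpower_Ropp, Rpower_1; auto. Qed.

Lemma d_sq x : is_derive (fun x => x * x / 4) x (x / 2).
Proof. auto_derive; auto. field. Qed.

Lemma d_inv c x : x <> 0 -> is_derive (fun x => c / x) x (- c / (x * x)).
Proof. intros. auto_derive; auto. change RinvImpl.Rinv with Rinv. field; auto. Qed.

Lemma d_half x : is_derive (fun x => x / 2) x (1 / 2).
Proof. auto_derive; auto. Qed.

Lemma dF mu x : Mu mu -> is_derive (fun x => f0 mu (x*x/4)) x (x/2 * f1 mu (x*x/4)).
Proof. intros. apply (dcomp (f0 mu) (fun x => x*x/4)). apply d_sq. apply d_f0; auto. Qed.

Lemma dG mu x : Mu mu -> is_derive (fun x => f1 mu (x*x/4)) x (x/2 * f2 mu (x*x/4)).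
Proof. intros. apply (dcomp (f1 mu) (fun x => x*x/4)). apply d_sq. apply d_f1; auto. Qed.

Lemma dU mu x : Mu mu -> 0 < x -> is_derive (U mu) x (U1 mu x).
Proof.
  intros Hm Hx. unfold U, U1. eapply deq. apply dmult. apply is_derive_Rpower; auto.
  apply dF; auto. rewrite Rpower_m1 by auto. field. lra.
Qed.

Lemma dU1 mu x : Mu mu -> 0 < x -> is_derive (U1 mu) x (- Q mu x * U mu x).
Proof.
  intros Hm Hx. unfold U1. eapply deq. apply dmult. apply is_derive_Rpower; auto.
  apply dplus. apply dmult. apply d_inv; lra. apply dF; auto.
  apply dmult. apply d_half. apply dG; auto.
  pose proof (f_ode mu (x*x/4) Hm) as Ho.
  set (F := f0 mu (x*x/4)) in *. set (G := f1 mu (x*x/4)) in *. set (H := f2 mu (x*x/4)) in *.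
  assert (Hz : x * x / 4 <> 0) by nra.
  assert (HH : H = - ((mu + 1) * G + F) / (x * x / 4)).
  { apply (Rmult_eq_reg_l (x*x/4)); auto.
    replace (x * x / 4 * (- ((mu + 1) * G + F) / (x * x / 4))) with (- ((mu + 1) * G + F)) by (field; lra). lra. }
  unfold U, Q. fold F. rewrite HH. rewrite Rpower_m1 by auto. fold G. field. lra.
Qed.

Lemma const_all (D : R -> R) a b : (forall y, is_derive D y 0) -> D a = D b.
Proof.
  intros HD. destruct (Rtotal_order a b) as [H|[H|H]].
  - destruct (MVT_closed D (fun _ => 0) a b H) as [c [_ Hc]]. intros; apply HD. lra.
  - subst; auto.
  - destruct (MVT_closed D (fun _ => 0) b a H) as [c [_ Hc]]. intros; apply HD. lra.
Qed.

Definition hW mu z := -2 * mu * f0 mu z * f0 (-mu) z + 2 * z * (f0 mu z * f1 (-mu) z - f0 (-mu) z * f1 mu z).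

Lemma hW_const mu z : Mu mu -> Mu (-mu) -> hW mu z = -2 * mu.
Proof.
  intros Hm Hm'.
  assert (hW mu z = hW mu 0).
  { apply const_all. intros y. unfold hW.
    eapply deq. apply dplus. apply dmult. apply dscal. apply d_f0; auto. apply d_f0; auto.
    apply dmult. apply dscal. apply (is_derive_id (K := R_AbsRing)).
    apply dminus. apply dmult. apply d_f0; auto. apply d_f1; auto.
    apply dmult. apply d_f0; auto. apply d_f1; auto.
    pose proof (f_ode mu y Hm) as O1. pose proof (f_ode (-mu) y Hm') as O2.
    simpl. unfold one. simpl.
    transitivity (2 * f0 mu y * (y * f2 (-mu) y + (- mu + 1) * f1 (-mu) y + f0 (-mu) y)
                  - 2 * f0 (-mu) y * (y * f2 mu y + (mu + 1) * f1 mu y + f0 mu y)).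
    ring. rewrite O1, O2. ring. }
  rewrite H. unfold hW, f0. rewrite !PSeries_0. simpl. ring.
Qed.

Lemma Wronskian mu x : Mu mu -> Mu (-mu) -> 0 < x ->
  U mu x * U1 (-mu) x - U1 mu x * U (-mu) x = -2 * mu.
Proof.
  intros Hm Hm' Hx. rewrite <- (hW_const mu (x*x/4)) by auto. unfold U, U1, hW.
  set (A := Rpower x (mu + 1/2)). set (B := Rpower x (-mu + 1/2)).
  assert (A * B = x). { unfold A, B. rewrite <- Rpower_plus. replace (mu + 1/2 + (-mu + 1/2)) with 1 by field.
    apply Rpower_1; auto. }
  transitivity (A * B * (-2 * mu / x * f0 mu (x * x / 4) * f0 (- mu) (x * x / 4) +
     x / 2 * (f0 mu (x * x / 4) * f1 (- mu) (x * x / 4) - f0 (- mu) (x * x / 4) * f1 mu (x * x / 4)))).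
  field. lra. rewrite H. field. lra.
Qed.


Lemma U_at1 mu : U mu 1 = f0 mu (1/4).
Proof. unfold U. rewrite Rpower_base1. replace (1*1/4) with (1/4) by field. ring. Qed.

Lemma U1_at1 mu : U1 mu 1 = (mu + 1/2) * f0 mu (1/4) + 1/2 * f1 mu (1/4).
Proof. unfold U1. rewrite Rpower_base1. replace (1*1/4) with (1/4) by field. field. Qed.

Lemma F_bounds mu z : Mu' mu -> 0 <= z <= 1/4 -> 6875/10000 <= f0 mu z <= 13125/10000.
Proof. intros Hm Hz. pose proof (f0_bound mu z Hm Hz). apply Rabs_le_between in H. lra. Qed.

Lemma U1_1_bound mu : Mu' mu -> Rabs (U1 mu 1) <= 42/100.
Proof.
  intros Hm. rewrite U1_at1.
  pose proof (F_bounds mu (1/4) Hm ltac:(lra)) as HF.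
  pose proof (f1_bound mu (1/4) Hm ltac:(lra)) as HG. apply Rabs_le_between in HG.
  simpl bc in HG. destruct Hm as [Hm1 Hm2].
  set (c := 1 / (1 + mu)).
  assert (Hc : Ropp 1 / ((0 + 1) * (0 + 1 + mu)) = - c) by (unfold c; field; lra).
  rewrite Hc in HG.
  assert (10/11 <= c <= 10/9).
  { unfold c. split.
    - replace (10/11) with (/ (11/10)) by field. unfold Rdiv; rewrite Rmult_1_l. apply Rinv_le_contravar; lra.
    - replace (10/9) with (/ (9/10)) by field. unfold Rdiv; rewrite Rmult_1_l. apply Rinv_le_contravar; lra. }
  set (F := f0 mu (1/4)) in *. set (G := f1 mu (1/4)) in *.
  apply Rabs_le. split; nra.
Qed.

Lemma Q_opp mu x : Q (-mu) x = Q mu x.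
Proof. unfold Q. f_equal. f_equal. ring. Qed.

Lemma Q_ge1 mu x : Mu' mu -> 0 < x -> 1 <= Q mu x.
Proof.
  intros [H1 H2] Hx. unfold Q. assert (0 <= (1/4 - mu*mu) / (x*x)).
  { apply Rdiv_le_0_compat; nra. } lra.
Qed.

Lemma Q_le mu x : Mu' mu -> 1 <= x -> Q mu x <= 5/4.
Proof.
  intros [H1 H2] Hx. unfold Q. assert ((1/4 - mu*mu) / (x*x) <= 1/4).
  { apply Rmult_le_reg_r with (x*x). nra. unfold Rdiv. rewrite Rmult_assoc, Rinv_l by nra. nra. }
  lra.
Qed.

Lemma dQ mu x : 0 < x -> is_derive (Q mu) x (- 2 * (1/4 - mu*mu) / (x*x*x)).
Proof. intros Hx. unfold Q. auto_derive. nra. change RinvImpl.Rinv with Rinv. field. lra. Qed.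

Lemma dQ_le mu x : Mu' mu -> 0 < x -> - 2 * (1/4 - mu*mu) / (x*x*x) <= 0.
Proof.
  intros [H1 H2] Hx. unfold Rdiv. apply Rmult_le_0_r. nra. left; apply Rinv_0_lt_compat.
  apply Rmult_lt_0_compat; nra.
Qed.

Lemma dopp (f : R -> R) x l : is_derive f x l -> is_derive (fun y => - f y) x (- l).
Proof. intros H. apply (is_derive_opp f x l H). Qed.

Lemma dinv (f : R -> R) x l : is_derive f x l -> f x <> 0 -> is_derive (fun y => / f y) x (- l / (f x * f x)).
Proof. intros H H0. eapply deq. apply (is_derive_inv f x l H H0). simpl. field; auto. Qed.

Lemma mono_le (F dF : R -> R) a b : a <= b -> (forall x, a <= x <= b -> is_derive F x (dF x)) ->
  (forall x, a <= x <= b -> dF x <= 0) -> F b <= F a.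
Proof.
  intros Hab HD Hn. destruct (Req_dec a b) as [->|Hne]. lra.
  destruct (MVT_closed F dF a b ltac:(lra) HD) as [c [Hc E]].
  assert (dF c * (b - a) <= 0). { apply Rmult_le_0_r. apply Hn; auto. lra. } lra.
Qed.

Definition En mu x := Q mu x * U mu x * U mu x + U1 mu x * U1 mu x.
Definition Dn mu x := U mu x * U mu x + U1 mu x * U1 mu x / Q mu x.

Lemma En_decr mu a b : Mu' mu -> 0 < a <= b -> En mu b <= En mu a.
Proof.
  intros Hm Hab. pose proof (Mu'_Mu mu Hm) as Hm0.
  apply (mono_le (En mu) (fun x => - 2 * (1/4 - mu*mu) / (x*x*x) * U mu x * U mu x)); try lra.
  - intros x Hx. unfold En. eapply deq. apply dplus. apply dmult. apply dmult.
    apply dQ; lra. apply dU; auto; lra. apply dU; auto; lra.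
    apply dmult; apply dU1; auto; lra. cbv beta. ring.
  - intros x Hx. pose proof (dQ_le mu x Hm ltac:(lra)).
    rewrite Rmult_assoc. apply Rmult_le_0_r; auto. apply Rle_0_sqr.
Qed.

Lemma Dn_incr mu a b : Mu' mu -> 0 < a <= b -> Dn mu a <= Dn mu b.
Proof.
  intros Hm Hab. pose proof (Mu'_Mu mu Hm) as Hm0.
  cut (- Dn mu b <= - Dn mu a). lra.
  apply (mono_le (fun x => - Dn mu x) (fun x => - 2 * (1/4 - mu*mu) / (x*x*x) * (U1 mu x * U1 mu x) / (Q mu x * Q mu x))); try lra.
  - intros x Hx. pose proof (Q_ge1 mu x Hm ltac:(lra)). unfold Dn.
    eapply deq. apply dopp.
    apply dplus. apply dmult; apply dU; auto; lra.
    unfold Rdiv at 1. apply dmult. apply dmult; apply dU1; auto; lra.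
    apply dinv. apply dQ; lra. lra.
    cbv beta. field. split; lra.
  - intros x Hx. pose proof (Q_ge1 mu x Hm ltac:(lra)). destruct Hm.
    unfold Rdiv. apply Rmult_le_0_r. 
    2: { left; apply Rinv_0_lt_compat; nra. }
    apply Rmult_le_0_r. 2: apply Rle_0_sqr.
    apply Rmult_le_0_r. nra. left; apply Rinv_0_lt_compat. apply Rmult_lt_0_compat; nra.
Qed.

Lemma En_1 mu : Mu' mu -> En mu 1 <= 233/100.
Proof.
  intros Hm. unfold En. rewrite U_at1.
  pose proof (F_bounds mu (1/4) Hm ltac:(lra)). pose proof (U1_1_bound mu Hm).
  pose proof (Q_le mu 1 Hm ltac:(lra)). pose proof (Q_ge1 mu 1 Hm ltac:(lra)).
  apply Rabs_le_between in H0.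
  set (F := f0 mu (1/4)) in *. set (G := U1 mu 1) in *. set (q := Q mu 1) in *.
  assert (F * F <= 13125/10000 * (13125/10000)) by nra.
  assert (G * G <= 42/100 * (42/100)) by nra.
  assert (q * F * F <= 5/4 * (13125/10000 * (13125/10000))) by nra.
  nra.
Qed.

Lemma Dn_1 mu : Mu' mu -> 47/100 <= Dn mu 1.
Proof.
  intros Hm. unfold Dn. rewrite U_at1.
  pose proof (F_bounds mu (1/4) Hm ltac:(lra)). pose proof (Q_ge1 mu 1 Hm ltac:(lra)).
  assert (0 <= U1 mu 1 * U1 mu 1 / Q mu 1) by (apply Rdiv_le_0_compat; [apply Rle_0_sqr|lra]).
  nra.
Qed.

Lemma U_bounds mu x : Mu' mu -> 1 <= x -> Rabs (U mu x) <= 2 /\ Rabs (U1 mu x) <= 2.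
Proof.
  intros Hm Hx. pose proof (En_decr mu 1 x Hm ltac:(lra)). pose proof (En_1 mu Hm).
  pose proof (Q_ge1 mu x Hm ltac:(lra)). unfold En in *.
  pose proof (Rle_0_sqr (U mu x)). pose proof (Rle_0_sqr (U1 mu x)). unfold Rsqr in *.
  assert (U mu x * U mu x <= 3) by nra.
  assert (U1 mu x * U1 mu x <= 3) by nra.
  split; apply Rabs_le; split; nra.
Qed.

Lemma U2_bound mu x : Mu' mu -> 1 <= x -> Rabs (- Q mu x * U mu x) <= 5/2.
Proof.
  intros Hm Hx. destruct (U_bounds mu x Hm Hx) as [H1 _].
  pose proof (Q_le mu x Hm Hx). pose proof (Q_ge1 mu x Hm ltac:(lra)).
  rewrite Ropp_mult_distr_l_reverse, Rabs_Ropp, Rabs_mult, (Rabs_right (Q mu x)) by lra.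
  pose proof (Rabs_pos (U mu x)). nra.
Qed.

Lemma Dn_ge mu x : Mu' mu -> 1 <= x -> 47/100 <= Dn mu x.
Proof. intros Hm Hx. pose proof (Dn_incr mu 1 x Hm ltac:(lra)). pose proof (Dn_1 mu Hm). lra. Qed.

Lemma zero_slope mu x : Mu' mu -> 1 <= x -> U mu x = 0 -> 47/100 <= U1 mu x * U1 mu x.
Proof.
  intros Hm Hx H0. pose proof (Dn_ge mu x Hm Hx). unfold Dn in H. rewrite H0 in H.
  pose proof (Q_ge1 mu x Hm ltac:(lra)).
  assert (U1 mu x * U1 mu x / Q mu x <= U1 mu x * U1 mu x).
  { unfold Rdiv. pose proof (Rle_0_sqr (U1 mu x)). unfold Rsqr in *.
    rewrite <- (Rmult_1_r (U1 mu x * U1 mu x)) at 2. apply Rmult_le_compat_l; auto.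
    rewrite <- Rinv_1. apply Rinv_le_contravar; lra. }
  lra.
Qed.

Lemma U_pos mu x : Mu' mu -> 0 < x <= 1 -> 0 < U mu x.
Proof.
  intros Hm Hx. unfold U. apply Rmult_lt_0_compat. apply Rpower_pos.
  assert (0 <= x * x / 4 <= 1/4) by (split; nra).
  pose proof (F_bounds mu _ Hm H). lra.
Qed.


Lemma cont_U mu x : Mu' mu -> 0 < x -> continuity_pt (U mu) x.
Proof. intros. apply (derive_cont_pt _ _ (U1 mu x)). apply dU; auto. apply Mu'_Mu; auto. Qed.
Lemma cont_U1 mu x : Mu' mu -> 0 < x -> continuity_pt (U1 mu) x.
Proof. intros. apply (derive_cont_pt _ _ (- Q mu x * U mu x)). apply dU1; auto. apply Mu'_Mu; auto. Qed.

Lemma win_gen (v v1 v2 : R -> R) L h :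
  (forall t, L <= t <= L + 1/10 -> is_derive v t (v1 t) /\ is_derive v1 t (v2 t) /\ Rabs (v2 t) <= 5/2) ->
  0 <= h <= 1/10 -> 6/10 <= v1 L -> 35/100 * h <= v (L + h) - v L.
Proof.
  intros HD Hh HL. destruct (Req_dec h 0) as [->|Hn]. rewrite Rplus_0_r. lra.
  destruct (MVT_closed v v1 L (L+h) ltac:(lra)) as [c [Hc E]].
  intros t Ht; apply HD; lra.
  rewrite E. replace (L + h - L) with h by ring.
  assert (35/100 <= v1 c).
  { destruct (Req_dec c L) as [->|Hc2]. lra.
    destruct (MVT_closed v1 v2 L c ltac:(lra)) as [d [Hd E2]].
    intros t Ht; apply HD; lra.
    destruct (HD d ltac:(lra)) as [_ [_ Hb]]. apply Rabs_le_between in Hb. nra. }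
  nra.
Qed.

Lemma win_hyp mu L : Mu' mu -> 1 <= L -> forall t, L <= t <= L + 1/10 ->
  is_derive (U mu) t (U1 mu t) /\ is_derive (U1 mu) t (- Q mu t * U mu t) /\ Rabs (- Q mu t * U mu t) <= 5/2.
Proof.
  intros Hm HL t Ht. pose proof (Mu'_Mu mu Hm). split; [|split].
  apply dU; auto; lra. apply dU1; auto; lra. apply U2_bound; auto; lra.
Qed.

Lemma win_up mu L h : Mu' mu -> 1 <= L -> 0 <= h <= 1/10 -> 6/10 <= U1 mu L ->
  35/100 * h <= U mu (L + h) - U mu L.
Proof. intros. apply (win_gen (U mu) (U1 mu) (fun t => - Q mu t * U mu t)); auto. apply win_hyp; auto. Qed.

Lemma win_down mu L h : Mu' mu -> 1 <= L -> 0 <= h <= 1/10 -> U1 mu L <= -6/10 ->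
  U mu (L + h) - U mu L <= - (35/100 * h).
Proof.
  intros. cut (35/100 * h <= (- U mu (L + h)) - (- U mu L)). lra.
  apply (win_gen (fun t => - U mu t) (fun t => - U1 mu t) (fun t => Q mu t * U mu t)); auto; try lra.
  intros t Ht. destruct (win_hyp mu L H H0 t Ht) as [A [B C]]. split; [|split].
  apply dopp; auto. eapply deq. apply dopp; eauto. ring.
  rewrite <- Rabs_Ropp. replace (- (Q mu t * U mu t)) with (- Q mu t * U mu t) by ring. auto.
Qed.

Lemma slope_cases mu a : Mu' mu -> 1 <= a -> U mu a = 0 -> 6/10 <= U1 mu a \/ U1 mu a <= -6/10.
Proof.
  intros Hm Ha H0. pose proof (zero_slope mu a Hm Ha H0).
  destruct (Rle_dec (6/10) (U1 mu a)); auto. destruct (Rle_dec (U1 mu a) (-6/10)); auto.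
  exfalso. nra.
Qed.

Lemma separation mu a y : Mu' mu -> 1 <= a -> U mu a = 0 -> a < y <= a + 1/10 -> U mu y <> 0.
Proof.
  intros Hm Ha H0 Hy. replace y with (a + (y - a)) by ring.
  destruct (slope_cases mu a Hm Ha H0) as [H|H].
  - pose proof (win_up mu a (y - a) Hm Ha ltac:(lra) H). lra.
  - pose proof (win_down mu a (y - a) Hm Ha ltac:(lra) H). lra.
Qed.

Lemma ivt_pos_neg (f : R -> R) a b : a <= b -> (forall t, a <= t <= b -> continuity_pt f t) ->
  0 < f a -> f b < 0 -> exists z, a <= z <= b /\ f z = 0.
Proof.
  intros Hab Hc Ha Hb. destruct (Req_dec a b) as [->|Hn]. lra.
  destruct (Ranalysis5.IVT_interv (fun t => - f t) a b) as [z [Hz Ez]]; try lra.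
  intros t Ht. apply continuity_pt_opp. apply Hc; auto.
  exists z. split; auto. lra.
Qed.

Lemma ivt_sign (f : R -> R) a b : a <= b -> (forall t, a <= t <= b -> continuity_pt f t) ->
  f a * f b < 0 -> exists z, a < z < b /\ f z = 0.
Proof.
  intros Hab Hc Hs.
  destruct (Rlt_dec 0 (f a)) as [Ha|Ha].
  - assert (f b < 0). { destruct (Rlt_dec (f b) 0); auto. exfalso. assert (0 <= f a * f b) by (apply Rmult_le_pos; lra). lra. }
    destruct (ivt_pos_neg f a b Hab Hc Ha H) as [z [Hz Ez]].
    exists z. split; auto. destruct Hz. split; apply Rnot_le_lt; intro; [assert (z = a) by lra|assert (z = b) by lra]; subst; lra.
  - assert (f a < 0). { destruct (Rtotal_order (f a) 0) as [?|[E|?]]; auto. rewrite E in Hs. lra. lra. }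
    assert (0 < f b). { destruct (Rlt_dec 0 (f b)); auto. exfalso. assert (0 <= f a * f b) by (replace (f a * f b) with ((- f a) * (- f b)) by ring; apply Rmult_le_pos; lra). lra. }
    destruct (ivt_pos_neg (fun t => - f t) a b Hab) as [z [Hz Ez]]; try lra.
    intros t Ht. apply continuity_pt_opp. apply Hc; auto.
    exists z. split. destruct Hz. split; apply Rnot_le_lt; intro; [assert (z = a) by lra|assert (z = b) by lra]; subst; lra. lra.
Qed.

Lemma sturm mu c : Mu' mu -> 0 < c -> exists y, c <= y <= c + PI /\ U mu y = 0.
Proof.
  intros Hm Hc. pose proof (Mu'_Mu mu Hm) as Hm0.
  destruct (Classical_Prop.classic (exists y, c <= y <= c + PI /\ U mu y = 0)) as [H|H]; auto.
  exfalso. pose proof PI_RGT_0 as HPI.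
  assert (Hsign : forall y, c <= y <= c + PI -> U mu c * U mu y > 0).
  { intros y Hy. destruct (Rtotal_order (U mu c * U mu y) 0) as [Hl|[Hl|Hl]]; auto.
    - destruct (ivt_sign (U mu) c y ltac:(lra)) as [z [Hz Ez]]; auto.
      intros t Ht; apply cont_U; auto; lra. exfalso; apply H. exists z. split; auto; lra.
    - exfalso. apply Rmult_integral in Hl. destruct Hl; apply H; [exists c|exists y]; split; auto; lra. }
  set (h := fun x => U1 mu x * sin (x - c) - U mu x * cos (x - c)).
  set (dh := fun x => (1 - Q mu x) * U mu x * sin (x - c)).
  assert (HD : forall x, c <= x <= c + PI -> is_derive h x (dh x)).
  { intros x Hx. unfold h, dh. eapply deq. apply dminus. apply dmult. apply dU1; auto; lra.
    apply (dcomp sin (fun x => x - c)). auto_derive; auto. apply is_derive_Reals, derivable_pt_lim_sin.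
    apply dmult. apply dU; auto; lra.
    apply (dcomp cos (fun x => x - c)). auto_derive; auto. apply is_derive_Reals, derivable_pt_lim_cos.
    cbv beta. ring. }
  assert (Hh : h c = - U mu c) by (unfold h; rewrite Rminus_diag, sin_0, cos_0; ring).
  assert (Hh2 : h (c + PI) = U mu (c + PI)) by (unfold h; replace (c + PI - c) with PI by ring; rewrite sin_PI, cos_PI; ring).
  assert (Hq : forall x, c <= x <= c + PI -> 1 - Q mu x <= 0) by (intros x Hx; pose proof (Q_ge1 mu x Hm ltac:(lra)); lra).
  assert (Hs : forall x, c <= x <= c + PI -> 0 <= sin (x - c)) by (intros x Hx; apply sin_ge_0; lra).
  pose proof (Hsign c ltac:(lra)). pose proof (Hsign (c + PI) ltac:(lra)).
  destruct (Rlt_dec 0 (U mu c)) as [Hp|Hp].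
  - assert (h (c + PI) <= h c).
    { apply (mono_le h dh); try lra. auto. intros x Hx. unfold dh.
      pose proof (Hsign x Hx). assert (0 < U mu x) by nra.
      pose proof (Hq x Hx). pose proof (Hs x Hx). 
      replace ((1 - Q mu x) * U mu x * sin (x - c)) with ((1 - Q mu x) * (U mu x * sin (x - c))) by ring.
      apply Rmult_le_0_r; auto. nra. }
    nra.
  - assert (U mu c < 0) by (assert (U mu c <> 0) by (intro E; rewrite E in *; lra); lra).
    assert (- h (c + PI) <= - h c).
    { apply (mono_le (fun x => - h x) (fun x => - dh x)); try lra. intros; apply dopp; auto.
      intros x Hx. unfold dh.
      pose proof (Hsign x Hx). assert (U mu x < 0) by nra.
      pose proof (Hq x Hx). pose proof (Hs x Hx). 
      replace (- ((1 - Q mu x) * U mu x * sin (x - c))) with ((1 - Q mu x) * (- U mu x * sin (x - c))) by ring.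
      apply Rmult_le_0_r; auto. nra. }
    nra.
Qed.


Lemma cont_nonzero (f : R -> R) z : continuity_pt f z -> f z <> 0 ->
  exists d, 0 < d /\ forall t, Rabs (t - z) < d -> f t <> 0.
Proof.
  intros Hc Hn. assert (He : 0 < Rabs (f z)) by (apply Rabs_pos_lt; auto).
  destruct (Hc (Rabs (f z)) He) as [d [Hd Hd2]].
  exists d. split; auto. intros t Ht E.
  destruct (Req_dec t z) as [->|Hne]. auto.
  assert (R_dist (f t) (f z) < Rabs (f z)). { apply Hd2. split. split. constructor. auto. unfold R_dist; auto. }
  unfold R_dist in H. rewrite E, Rminus_0_l, Rabs_Ropp in H. lra.
Qed.

Lemma least_zero (f : R -> R) a b : a <= b -> (forall t, a <= t <= b -> continuity_pt f t) ->
  (exists c, a <= c <= b /\ f c = 0) ->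
  exists z, a <= z <= b /\ f z = 0 /\ forall y, a <= y < z -> f y <> 0.
Proof.
  intros Hab Hc [c [Hc1 Hc2]].
  destruct (Req_dec (f a) 0) as [Ha|Ha].
  { exists a. split; [lra|split; auto]. intros; lra. }
  set (E := fun y => a <= y <= b /\ forall t, a <= t <= y -> f t <> 0).
  destruct (completeness E) as [z [Hz1 Hz2]].
  { exists b. intros y [Hy _]. lra. }
  { exists a. split. lra. intros t Ht. replace t with a by lra. auto. }
  assert (Haz : a <= z) by (apply Hz1; split; [lra|intros t Ht; replace t with a by lra; auto]).
  assert (Hzb : z <= b) by (apply Hz2; intros y [Hy _]; lra).
  assert (Hbefore : forall y, a <= y < z -> f y <> 0).
  { intros y Hy. destruct (Classical_Prop.classic (exists e, E e /\ y < e)) as [[e [He1 He2]]|Hn].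
    - destruct He1 as [_ He]. apply He. lra.
    - exfalso. assert (z <= y). apply Hz2. intros e He. apply Rnot_lt_le. intro. apply Hn. exists e; auto. lra. }
  exists z. split; [lra|split; auto].
  destruct (Req_dec (f z) 0) as [|Hfz]; auto. exfalso.
  destruct (cont_nonzero f z (Hc z ltac:(lra)) Hfz) as [d [Hd Hd2]].
  set (w := Rmin (z + d/2) b).
  assert (Hw : E w).
  { split. unfold w. split. apply Rmin_glb; lra. apply Rmin_r.
    intros t Ht. destruct (Rlt_dec t z). apply Hbefore; lra.
    apply Hd2. assert (w <= z + d/2) by apply Rmin_l. apply Rabs_def1; lra. }
  assert (w <= z) by (apply Hz1; auto).
  assert (w = b). { unfold w in *. destruct (Rle_dec (z + d/2) b). rewrite Rmin_left in H; lra. rewrite Rmin_right; lra. }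
  destruct Hw as [_ Hw]. apply (Hw c); auto. lra.
Qed.

Lemma first_zero mu : Mu' mu -> exists z, 0 < z /\ U mu z = 0 /\ forall y, 0 < y < z -> U mu y <> 0.
Proof.
  intros Hm. destruct (sturm mu 1 Hm ltac:(lra)) as [c [Hc1 Hc2]].
  destruct (least_zero (U mu) 1 (1 + PI)) as [z [Hz1 [Hz2 Hz3]]].
  pose proof PI_RGT_0; lra. intros t Ht; apply cont_U; auto; lra. exists c; auto.
  exists z. split. lra. split; auto. intros y Hy.
  destruct (Rle_dec y 1). pose proof (U_pos mu y Hm ltac:(lra)). lra. apply Hz3; lra.
Qed.

Lemma zero_ge1 mu y : Mu' mu -> 0 < y -> U mu y = 0 -> 1 < y.
Proof. intros Hm Hy E. destruct (Rlt_dec 1 y); auto. pose proof (U_pos mu y Hm ltac:(lra)). lra. Qed.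

Lemma next_zero mu t : Mu' mu -> 1 <= t -> U mu t = 0 ->
  exists z, t < z /\ U mu z = 0 /\ forall y, t < y < z -> U mu y <> 0.
Proof.
  intros Hm Ht H0. destruct (sturm mu (t + 1/20) Hm ltac:(lra)) as [c [Hc1 Hc2]].
  destruct (least_zero (U mu) (t + 1/20) (t + 1/20 + PI)) as [z [Hz1 [Hz2 Hz3]]].
  pose proof PI_RGT_0; lra. intros s Hs; apply cont_U; auto; lra. exists c; auto.
  exists z. split. lra. split; auto. intros y Hy.
  destruct (Rle_dec y (t + 1/20)). apply (separation mu t y); auto; lra. apply Hz3; lra.
Qed.

Definition NZ mu t z := t < z /\ U mu z = 0 /\ forall y, t < y < z -> U mu y <> 0.

Definition nextz mu t := ClassicalEpsilon.epsilon (inhabits 0) (NZ mu t).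

Fixpoint zs mu (n : nat) : R :=
  match n with 0%nat => nextz mu 0 | S k => nextz mu (zs mu k) end.

Lemma zs_spec mu n : Mu' mu ->
  (NZ mu (match n with 0%nat => 0 | S k => zs mu k end) (zs mu n)) /\ 1 <= zs mu n.
Proof.
  intros Hm. induction n.
  - simpl. assert (NZ mu 0 (nextz mu 0)).
    { unfold nextz. apply ClassicalEpsilon.epsilon_spec. destruct (first_zero mu Hm) as [z Hz]. exists z. auto. }
    split; auto. destruct H as [A [B _]]. left; apply (zero_ge1 mu); auto.
  - destruct IHn as [[A [B C]] D]. simpl.
    assert (NZ mu (zs mu n) (nextz mu (zs mu n))).
    { unfold nextz. apply ClassicalEpsilon.epsilon_spec. destruct (next_zero mu (zs mu n) Hm D B) as [z Hz]. exists z. auto. }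
    split; auto. destruct H as [A' [B' _]]. lra.
Qed.

Lemma zs_zero mu n : Mu' mu -> U mu (zs mu n) = 0.
Proof. intros Hm. destruct (zs_spec mu n Hm) as [[_ [H _]] _]. auto. Qed.

Lemma zs_ge1 mu n : Mu' mu -> 1 <= zs mu n.
Proof. intros Hm. apply (zs_spec mu n Hm). Qed.

Lemma zs_S mu n : Mu' mu -> zs mu n < zs mu (S n) /\ forall y, zs mu n < y < zs mu (S n) -> U mu y <> 0.
Proof. intros Hm. destruct (zs_spec mu (S n) Hm) as [[A [_ C]] _]. split; auto. Qed.

Lemma zs_0 mu : Mu' mu -> forall y, 0 < y < zs mu 0 -> U mu y <> 0.
Proof. intros Hm. destruct (zs_spec mu 0 Hm) as [[_ [_ C]] _]. auto. Qed.

Lemma zs_mono mu i j : Mu' mu -> (i < j)%nat -> zs mu i < zs mu j.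
Proof.
  intros Hm Hij. induction Hij. apply zs_S; auto.
  pose proof (zs_S mu m Hm). lra.
Qed.

Lemma zs_all mu n : Mu' mu -> forall y, 0 < y < zs mu n -> U mu y = 0 -> exists k, (k < n)%nat /\ y = zs mu k.
Proof.
  intros Hm. induction n; intros y Hy E.
  - exfalso. apply (zs_0 mu Hm y); auto.
  - destruct (Rtotal_order y (zs mu n)) as [H|[H|H]].
    + destruct (IHn y ltac:(lra) E) as [k [Hk1 Hk2]]. exists k; split; auto.
    + exists n; split; auto.
    + exfalso. destruct (zs_S mu n Hm) as [_ C]. apply (C y); auto. lra.
Qed.


Definition Nu (nu : R) := 0 < nu <= 1/200.

Lemma Nu_Mu' nu : Nu nu -> Mu' nu /\ Mu' (- nu).
Proof. unfold Nu, Mu'. lra. Qed.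

Lemma W_nu nu x : Nu nu -> 0 < x -> U nu x * U1 (-nu) x - U1 nu x * U (-nu) x = -2 * nu.
Proof. intros Hn Hx. destruct (Nu_Mu' nu Hn). apply Wronskian; auto; apply Mu'_Mu; auto. Qed.

Definition Pf nu x := U nu x * U (-nu) x + U1 nu x * U1 (-nu) x / Q nu x.

Lemma P_sq nu x : Nu nu -> 1 <= x -> 0 < Pf nu x * Pf nu x.
Proof.
  intros Hn Hx. destruct (Nu_Mu' nu Hn) as [H1 H2].
  pose proof (Dn_ge nu x H1 Hx). pose proof (Dn_ge (-nu) x H2 Hx).
  pose proof (W_nu nu x Hn ltac:(lra)). pose proof (Q_ge1 nu x H1 ltac:(lra)).
  assert (Dn nu x * Dn (-nu) x - Pf nu x * Pf nu x = (-2*nu) * (-2*nu) / Q nu x).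
  { rewrite <- H3. unfold Dn, Pf. rewrite Q_opp. field. lra. }
  assert ((-2*nu) * (-2*nu) / Q nu x <= 4 * nu * nu).
  { unfold Rdiv. replace (4 * nu * nu) with ((-2*nu)*(-2*nu) * 1) by ring.
    apply Rmult_le_compat_l. nra. rewrite <- Rinv_1. apply Rinv_le_contravar; lra. }
  destruct Hn. nra.
Qed.

Lemma P_1 nu : Nu nu -> 0 < Pf nu 1.
Proof.
  intros Hn. destruct (Nu_Mu' nu Hn) as [H1 H2]. unfold Pf. rewrite !U_at1.
  pose proof (F_bounds nu (1/4) H1 ltac:(lra)). pose proof (F_bounds (-nu) (1/4) H2 ltac:(lra)).
  pose proof (U1_1_bound nu H1). pose proof (U1_1_bound (-nu) H2). pose proof (Q_ge1 nu 1 H1 ltac:(lra)).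
  apply Rabs_le_between in H3. apply Rabs_le_between in H4.
  assert (Rabs (U1 nu 1 * U1 (- nu) 1 / Q nu 1) <= 42/100 * (42/100)).
  { unfold Rdiv. rewrite !Rabs_mult. rewrite Rabs_inv, (Rabs_right (Q nu 1)) by lra.
    assert (/ Q nu 1 <= 1) by (apply Rle_trans with (/ 1); [apply Rinv_le_contravar; lra | rewrite Rinv_1; lra]).
    assert (0 < / Q nu 1) by (apply Rinv_0_lt_compat; lra).
    pose proof (U1_1_bound nu H1). pose proof (U1_1_bound (-nu) H2).
    pose proof (Rabs_pos (U1 nu 1)). pose proof (Rabs_pos (U1 (-nu) 1)).
    apply Rle_trans with (42/100 * (42/100) * 1). 2: lra.
    apply Rmult_le_compat; try lra. apply Rmult_le_pos; auto. apply Rmult_le_compat; auto. }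
  apply Rabs_le_between in H6. nra.
Qed.

Lemma cont_P nu x : Nu nu -> 1 <= x -> continuity_pt (Pf nu) x.
Proof.
  intros Hn Hx. destruct (Nu_Mu' nu Hn) as [H1 H2]. unfold Pf.
  apply continuity_pt_plus. apply continuity_pt_mult; apply cont_U; auto; lra.
  apply continuity_pt_div. apply continuity_pt_mult; apply cont_U1; auto; lra.
  apply (derive_cont_pt _ _ _ (dQ nu x ltac:(lra))).
  pose proof (Q_ge1 nu x H1 ltac:(lra)). lra.
Qed.

Lemma P_pos nu x : Nu nu -> 1 <= x -> 0 < Pf nu x.
Proof.
  intros Hn Hx. pose proof (P_sq nu x Hn Hx).
  destruct (Rlt_dec 0 (Pf nu x)) as [|Hp]; auto. exfalso.
  assert (Pf nu x < 0) by (destruct (Rtotal_order (Pf nu x) 0) as [|[E|]]; auto; [rewrite E in H; lra| lra]).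
  destruct (ivt_sign (Pf nu) 1 x Hx) as [z [Hz Ez]].
  intros t Ht; apply cont_P; auto; lra.
  pose proof (P_1 nu Hn). nra.
  pose proof (P_sq nu z Hn ltac:(lra)). rewrite Ez in H1. lra.
Qed.

Lemma win_back_gen (v v1 v2 : R -> R) L h :
  (forall t, L - h <= t <= L -> is_derive v t (v1 t) /\ is_derive v1 t (v2 t) /\ Rabs (v2 t) <= 5/2) ->
  0 <= h <= 1/10 -> 6/10 <= v1 L -> 35/100 * h <= v L - v (L - h).
Proof.
  intros HD Hh HL. destruct (Req_dec h 0) as [->|Hn]. rewrite Rminus_0_r. lra.
  destruct (MVT_closed v v1 (L - h) L ltac:(lra)) as [c [Hc E]].
  intros t Ht; apply HD; lra.
  rewrite E. replace (L - (L - h)) with h by ring.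
  assert (35/100 <= v1 c).
  { destruct (Req_dec c L) as [->|Hc2]. lra.
    destruct (MVT_closed v1 v2 c L ltac:(lra)) as [d [Hd E2]].
    intros t Ht; apply HD; lra.
    destruct (HD d ltac:(lra)) as [_ [_ Hb]]. apply Rabs_le_between in Hb. nra. }
  nra.
Qed.

Lemma back_up mu L h : Mu' mu -> 1 <= L - h -> 0 <= h <= 1/10 -> 6/10 <= U1 mu L ->
  35/100 * h <= U mu L - U mu (L - h).
Proof.
  intros Hm HL Hh HS. apply (win_back_gen (U mu) (U1 mu) (fun t => - Q mu t * U mu t)); auto.
  intros t Ht. pose proof (Mu'_Mu mu Hm). split; [|split].
  apply dU; auto; lra. apply dU1; auto; lra. apply U2_bound; auto; lra.
Qed.

Lemma back_down mu L h : Mu' mu -> 1 <= L - h -> 0 <= h <= 1/10 -> U1 mu L <= -6/10 ->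
  U mu L - U mu (L - h) <= - (35/100 * h).
Proof.
  intros Hm HL Hh HS. cut (35/100 * h <= (- U mu L) - (- U mu (L - h))). lra.
  apply (win_back_gen (fun t => - U mu t) (fun t => - U1 mu t) (fun t => Q mu t * U mu t)); auto; try lra.
  intros t Ht. pose proof (Mu'_Mu mu Hm). split; [|split].
  apply dopp; apply dU; auto; lra. eapply deq. apply dopp; apply dU1; auto; lra. ring.
  rewrite <- Rabs_Ropp. replace (- (Q mu t * U mu t)) with (- Q mu t * U mu t) by ring. apply U2_bound; auto; lra.
Qed.

Lemma alt_slope mu a c : Mu' mu -> 1 <= a -> a < c -> U mu a = 0 -> U mu c = 0 ->
  (forall y, a < y < c -> U mu y <> 0) -> U1 mu a * U1 mu c < 0.
Proof.
  intros Hm Ha Hac Ea Ec Hno.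
  assert (Hgap : a + 1/10 < c).
  { destruct (Rlt_dec (a + 1/10) c); auto. exfalso. apply (separation mu a c Hm Ha Ea); auto; lra. }
  assert (Hcont : forall t, a + 1/20 <= t <= c - 1/20 -> continuity_pt (U mu) t).
  { intros t Ht; apply cont_U; auto; lra. }
  destruct (slope_cases mu a Hm Ha Ea) as [Sa|Sa];
  destruct (slope_cases mu c Hm ltac:(lra) Ec) as [Sc|Sc]; try nra; exfalso.
  - pose proof (win_up mu a (1/20) Hm Ha ltac:(lra) Sa).
    pose proof (back_up mu c (1/20) Hm ltac:(lra) ltac:(lra) Sc).
    destruct (ivt_sign (U mu) (a + 1/20) (c - 1/20)) as [z [Hz Ez]]; auto. lra. nra.
    apply (Hno z); auto; lra.
  - pose proof (win_down mu a (1/20) Hm Ha ltac:(lra) Sa).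
    pose proof (back_down mu c (1/20) Hm ltac:(lra) ltac:(lra) Sc).
    destruct (ivt_sign (U mu) (a + 1/20) (c - 1/20)) as [z [Hz Ez]]; auto. lra. nra.
    apply (Hno z); auto; lra.
Qed.

Lemma first_slope mu : Mu' mu -> U1 mu (zs mu 0) <= - 6/10.
Proof.
  intros Hm. set (a := zs mu 0).
  assert (Ha : 1 < a) by (apply (zero_ge1 mu); auto; [pose proof (zs_ge1 mu 0 Hm); unfold a; lra | apply zs_zero; auto]).
  assert (Ea : U mu a = 0) by (apply zs_zero; auto).
  destruct (slope_cases mu a Hm ltac:(lra) Ea) as [S|S]; auto. exfalso.
  set (h := Rmin (1/20) (a - 1)).
  assert (Hh : 0 < h <= 1/20 /\ h <= a - 1) by (unfold h; split; [split; [apply Rmin_glb_lt; lra | apply Rmin_l] | apply Rmin_r]).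
  pose proof (back_up mu a h Hm ltac:(lra) ltac:(lra) S).
  assert (U mu (a - h) < 0) by nra.
  pose proof (U_pos mu 1 Hm ltac:(lra)).
  destruct (Req_dec (a - h) 1) as [E|Ne]. rewrite E in H0. lra.
  destruct (ivt_sign (U mu) 1 (a - h)) as [z [Hz Ez]]. lra.
  intros t Ht; apply cont_U; auto; lra. nra.
  apply (zs_0 mu Hm z); auto. unfold a in *; lra.
Qed.

Lemma w_at_vzero nu a : Nu nu -> 0 < a -> U nu a = 0 -> U (-nu) a * U1 nu a = 2 * nu.
Proof. intros Hn Ha E. pose proof (W_nu nu a Hn Ha). rewrite E in H. lra. Qed.

Lemma v_at_wzero nu b : Nu nu -> 0 < b -> U (-nu) b = 0 -> U nu b * U1 (-nu) b = -2 * nu.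
Proof. intros Hn Hb E. pose proof (W_nu nu b Hn Hb). rewrite E in H. lra. Qed.

Lemma cross nu b : Nu nu -> 1 <= b -> U (-nu) b = 0 -> exists z, b < z < b + 20 * nu /\ U nu z = 0.
Proof.
  intros Hn Hb E. destruct (Nu_Mu' nu Hn) as [H1 H2].
  pose proof (v_at_wzero nu b Hn ltac:(lra) E) as HW.
  pose proof (zero_slope (-nu) b H2 Hb E) as Hw1.
  pose proof (Dn_ge nu b H1 Hb) as HD. pose proof (Q_ge1 nu b H1 ltac:(lra)) as HQ1.
  pose proof (Q_le nu b H1 Hb) as HQ2. pose proof (P_pos nu b Hn Hb) as HP.
  unfold Pf in HP. rewrite E, Rmult_0_r, Rplus_0_l in HP.
  unfold Dn in HD.
  set (v := U nu b) in *. set (v1 := U1 nu b) in *. set (w1 := U1 (-nu) b) in *.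
  destruct Hn as [Hn1 Hn2].
  assert (Hv2 : v * v <= 9 * nu * nu).
  { assert (v * v * (w1 * w1) = 4 * nu * nu) by (replace (v * v * (w1 * w1)) with ((v * w1) * (v * w1)) by ring; rewrite HW; ring).
    nra. }
  assert (Hv : - (3 * nu) <= v <= 3 * nu) by (split; nra).
  assert (Hv1sq : 36/100 < v1 * v1).
  { assert (v1 * v1 / Q nu b >= 47/100 - 9 * nu * nu) by lra.
    assert (v1 * v1 / Q nu b <= v1 * v1).
    { unfold Rdiv. pose proof (Rle_0_sqr v1). unfold Rsqr in *.
      rewrite <- (Rmult_1_r (v1 * v1)) at 2. apply Rmult_le_compat_l; auto.
      apply Rle_trans with (/ 1); [apply Rinv_le_contravar; lra | rewrite Rinv_1; lra]. }
    nra. }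
  assert (Hvw : 0 < v1 * w1).
  { unfold Rdiv in HP. assert (0 < / Q nu b) by (apply Rinv_0_lt_compat; lra).
    destruct (Rlt_dec 0 (v1 * w1)); auto. nra. }
  assert (Hh : 0 <= 20 * nu <= 1/10) by lra.
  destruct (Rle_dec (6/10) v1) as [Sv|Sv].
  - assert (0 < w1) by nra. assert (v < 0) by nra.
    pose proof (win_up nu b (20 * nu) H1 Hb Hh Sv) as Hwin. fold v in Hwin.
    destruct (ivt_sign (U nu) b (b + 20 * nu)) as [z [Hz Ez]]. lra.
    intros t Ht; apply cont_U; auto; lra.
    fold v. assert (Hu : 0 < U nu (b + 20*nu)) by lra.
    replace (v * U nu (b + 20 * nu)) with (- ((-v) * U nu (b + 20 * nu))) by ring.
    assert (0 < (-v) * U nu (b + 20 * nu)) by (apply Rmult_lt_0_compat; lra). lra.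
    exists z; auto.
  - assert (v1 <= - (6/10)) by nra. assert (w1 < 0) by nra. assert (0 < v) by nra.
    assert (Hs : v1 <= -6/10) by lra. pose proof (win_down nu b (20 * nu) H1 Hb Hh Hs) as Hwin. fold v in Hwin.
    destruct (ivt_sign (U nu) b (b + 20 * nu)) as [z [Hz Ez]]. lra.
    intros t Ht; apply cont_U; auto; lra.
    fold v. assert (Hu : U nu (b + 20*nu) < 0) by lra.
    replace (v * U nu (b + 20 * nu)) with (- (v * (- U nu (b + 20 * nu)))) by ring.
    assert (0 < v * (- U nu (b + 20 * nu))) by (apply Rmult_lt_0_compat; lra). lra.
    exists z; auto.
Qed.


Definition prevz mu n := match n with 0%nat => 0 | S k => zs mu k end.

Lemma prevz_0 mu : prevz mu 0 = 0. Proof. reflexivity. Qed.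
Lemma prevz_S mu n : prevz mu (S n) = zs mu n. Proof. reflexivity. Qed.

Lemma prevz_lt mu n : Mu' mu -> 0 <= prevz mu n < zs mu n.
Proof.
  intros Hm. destruct n. rewrite prevz_0. pose proof (zs_ge1 mu 0 Hm). lra.
  rewrite prevz_S. pose proof (zs_ge1 mu n Hm). destruct (zs_S mu n Hm). lra.
Qed.

Lemma noz mu n y : Mu' mu -> prevz mu n < y < zs mu n -> U mu y <> 0.
Proof.
  intros Hm Hy. destruct n; first [rewrite prevz_0 in Hy | rewrite prevz_S in Hy]. apply zs_0; auto. apply (zs_S mu n Hm); auto.
Qed.

Lemma exist_w nu n : Nu nu -> exists c, prevz nu n < c < zs nu n /\ U (-nu) c = 0.
Proof.
  intros Hn. destruct (Nu_Mu' nu Hn) as [H1 H2].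
  destruct n as [|k].
  - first [rewrite prevz_0 | rewrite prevz_S]. set (a := zs nu 0).
    assert (Ha : 1 < a) by (apply (zero_ge1 nu); auto; [pose proof (zs_ge1 nu 0 H1); unfold a; lra | apply zs_zero; auto]).
    pose proof (first_slope nu H1) as S. fold a in S.
    pose proof (w_at_vzero nu a Hn ltac:(lra) (zs_zero nu 0 H1)) as HW.
    assert (U (-nu) a < 0).
    { destruct (Rlt_dec (U (-nu) a) 0); auto. destruct Hn. nra. }
    pose proof (U_pos (-nu) 1 H2 ltac:(lra)).
    destruct (ivt_sign (U (-nu)) 1 a) as [z [Hz Ez]]. lra.
    intros t Ht; apply cont_U; auto; lra. nra.
    exists z. split; auto. lra.
  - rewrite prevz_S.
    pose proof (zs_ge1 nu k H1). pose proof (zs_S nu k H1) as [Hlt Hno].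
    pose proof (alt_slope nu (zs nu k) (zs nu (S k)) H1 H Hlt (zs_zero nu k H1) (zs_zero nu (S k) H1) Hno) as Halt.
    pose proof (w_at_vzero nu (zs nu k) Hn ltac:(lra) (zs_zero nu k H1)) as HWa.
    pose proof (w_at_vzero nu (zs nu (S k)) Hn ltac:(lra) (zs_zero nu (S k) H1)) as HWc.
    assert (U (-nu) (zs nu k) * U (-nu) (zs nu (S k)) < 0).
    { assert ((U (-nu) (zs nu k) * U1 nu (zs nu k)) * (U (-nu) (zs nu (S k)) * U1 nu (zs nu (S k))) > 0)
        by (rewrite HWa, HWc; destruct Hn; nra).
      replace ((U (-nu) (zs nu k) * U1 nu (zs nu k)) * (U (-nu) (zs nu (S k)) * U1 nu (zs nu (S k))))
        with ((U (-nu) (zs nu k) * U (-nu) (zs nu (S k))) * (U1 nu (zs nu k) * U1 nu (zs nu (S k)))) in H0 by ring.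
      destruct (Rlt_dec (U (- nu) (zs nu k) * U (- nu) (zs nu (S k))) 0); auto. nra. }
    destruct (ivt_sign (U (-nu)) (zs nu k) (zs nu (S k))) as [z [Hz Ez]]. lra.
    intros t Ht; apply cont_U; auto; lra. auto.
    exists z. split; auto.
Qed.

Lemma w_nonzero_at_a nu n : Nu nu -> U (-nu) (zs nu n) <> 0.
Proof.
  intros Hn E. destruct (Nu_Mu' nu Hn) as [H1 H2].
  pose proof (zs_ge1 nu n H1).
  pose proof (w_at_vzero nu (zs nu n) Hn ltac:(lra) (zs_zero nu n H1)). rewrite E in H0. destruct Hn. lra.
Qed.

Lemma uniq_w_lt nu n c1 c2 : Nu nu -> prevz nu n < c1 < c2 -> c2 < zs nu n ->
  U (-nu) c1 = 0 -> U (-nu) c2 = 0 -> False.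
Proof.
  intros Hn Hc Hc2 E1 E2. destruct (Nu_Mu' nu Hn) as [H1 H2].
  pose proof (prevz_lt nu n H1).
  assert (Hc1 : 1 < c1) by (apply (zero_ge1 (-nu)); auto; lra).
  destruct (cross nu c1 Hn ltac:(lra) E1) as [z [Hz Ez]].
  assert (zs nu n <= z).
  { destruct (Rle_dec (zs nu n) z); auto. exfalso. apply (noz nu n z H1); auto. lra. }
  apply (separation (-nu) c1 c2 H2 ltac:(lra) E1); auto. destruct Hn; lra.
Qed.

Lemma interlace nu n : Nu nu -> prevz nu n < zs (-nu) n < zs nu n.
Proof.
  intros Hn. destruct (Nu_Mu' nu Hn) as [H1 H2].
  induction n.
  - first [rewrite prevz_0 | rewrite prevz_S]. destruct (exist_w nu 0 Hn) as [c [Hc Ec]]. rewrite prevz_0 in Hc.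
    pose proof (zs_ge1 (-nu) 0 H2).
    split. lra.
    destruct (Rlt_dec (zs (-nu) 0) (zs nu 0)); auto. exfalso.
    apply (zs_0 (-nu) H2 c); auto. lra.
  - destruct (exist_w nu (S n) Hn) as [c [Hc Ec]]. rewrite prevz_S in Hc |- *.
    pose proof (zs_S (-nu) n H2) as [Hlt Hno].
    assert (Hle : zs (-nu) (S n) <= c).
    { destruct (Rle_dec (zs (-nu) (S n)) c); auto. exfalso. apply (Hno c); auto. lra. }
    split; [|lra].
    destruct (Rtotal_order (zs nu n) (zs (-nu) (S n))) as [L|[L|L]]; auto.
    + exfalso. apply (w_nonzero_at_a nu n Hn). rewrite L. apply zs_zero; auto.
    + exfalso. apply (uniq_w_lt nu n (zs (-nu) n) (zs (-nu) (S n)) Hn); auto; try lra.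
      apply zs_zero; auto. apply zs_zero; auto.
Qed.

Lemma gap_upper nu n : Nu nu -> zs nu n - zs (-nu) n < 20 * nu.
Proof.
  intros Hn. destruct (Nu_Mu' nu Hn) as [H1 H2]. pose proof (interlace nu n Hn).
  pose proof (zs_ge1 (-nu) n H2).
  destruct (cross nu (zs (-nu) n) Hn H0 (zs_zero (-nu) n H2)) as [z [Hz Ez]].
  assert (zs nu n <= z).
  { destruct (Rle_dec (zs nu n) z); auto. exfalso. apply (noz nu n z H1); auto. lra. }
  lra.
Qed.

Lemma gap_lower nu n : Nu nu -> nu / 2 <= zs nu n - zs (-nu) n.
Proof.
  intros Hn. destruct (Nu_Mu' nu Hn) as [H1 H2]. pose proof (interlace nu n Hn).
  pose proof (zs_ge1 (-nu) n H2). set (a := zs nu n) in *. set (b := zs (-nu) n) in *.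
  pose proof (w_at_vzero nu a Hn ltac:(lra) (zs_zero nu n H1)) as HW.
  destruct (U_bounds nu a H1 ltac:(lra)) as [_ Hv1].
  assert (Hwa : nu <= Rabs (U (-nu) a)).
  { apply Rmult_le_reg_r with (Rabs (U1 nu a)). 
    { apply Rabs_pos_lt. intro E. rewrite E in HW. destruct Hn; lra. }
    rewrite <- Rabs_mult, HW, (Rabs_right (2 * nu)) by (destruct Hn; lra).
    pose proof (Rabs_pos (U1 nu a)). destruct Hn. nra. }
  destruct (MVT_closed (U (-nu)) (U1 (-nu)) b a ltac:(lra)) as [c [Hc E]].
  intros t Ht. apply dU; [apply Mu'_Mu; auto | lra].
  assert (Eb : U (-nu) b = 0) by (apply zs_zero; auto). rewrite Eb in E.
  destruct (U_bounds (-nu) c H2 ltac:(lra)) as [_ Hw1].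
  rewrite Rminus_0_r in E. rewrite E, Rabs_mult, (Rabs_right (a - b)) in Hwa by lra.
  nra.
Qed.


Lemma Bessel_zero_iff mu x : Mu' mu -> 0 < x -> (BesselJ mu x = 0 <-> U mu x = 0).
Proof.
  intros Hm Hx. pose proof (Mu'_Mu mu Hm) as Hm0.
  rewrite BesselJ_eq by auto. unfold U.
  destruct (Gamma_facts mu Hm0) as [HG _].
  assert (0 < Rpower (x/2) mu / Gamma (mu + 1)) by (apply Rdiv_lt_0_compat; [apply Rpower_pos|auto]).
  pose proof (Rpower_pos x (mu + 1/2)).
  split; intro E.
  - apply Rmult_integral in E. destruct E as [E|E]. lra. rewrite E; ring.
  - apply Rmult_integral in E. destruct E as [E|E]. lra. rewrite E; ring.
Qed.

Lemma nth_zero mu n : Mu' mu -> (1 <= n)%nat -> is_nth_pos_zero mu n (zs mu (n - 1)).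
Proof.
  intros Hm Hn. pose proof (zs_ge1 mu (n-1) Hm).
  split. lra. split. apply Bessel_zero_iff; auto. lra. apply zs_zero; auto.
  exists (map (zs mu) (seq 0 (n - 1))). split; [|split].
  - apply NoDup_map_NoDup_ForallPairs. intros i j _ _ E.
    destruct (Nat.lt_total i j) as [L|[L|L]]; auto.
    pose proof (zs_mono mu i j Hm L); lra. pose proof (zs_mono mu j i Hm L); lra.
    apply seq_NoDup.
  - rewrite length_map, length_seq. auto.
  - intros x. rewrite in_map_iff. split.
    + intros [k [Ek Hk]]. apply in_seq in Hk. subst x.
      pose proof (zs_ge1 mu k Hm). pose proof (zs_mono mu k (n-1) Hm ltac:(lia)).
      split. lra. apply Bessel_zero_iff; auto. lra. apply zs_zero; auto.
    + intros [Hx E]. apply Bessel_zero_iff in E; auto; try lra.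
      destruct (zs_all mu (n-1) Hm x Hx E) as [k [Hk Ek]].
      exists k. split; auto. apply in_seq. lia.
Qed.

Theorem lemma7p4 :
  exists (m M alpha0 : R),
    0 < m /\ m <= M /\ 0 < alpha0 < 1 /\
    forall (alpha : R) (n : nat),
      alpha0 <= alpha < 1 -> (1 <= n)%nat ->
      exists jp jm : R,
        is_nth_pos_zero (nu_alpha alpha) n jp /\
        is_nth_pos_zero (- nu_alpha alpha) n jm /\
        m * (1 - alpha) <= jp - jm <= M * (1 - alpha).
Proof.
  exists (1/4), 20, (199/200). split. lra. split. lra. split. lra.
  intros alpha n Ha Hn.
  set (nu := nu_alpha alpha).
  assert (Hnu : (1 - alpha) / 2 <= nu <= 1 - alpha).
  { assert (E : nu * (2 - alpha) = 1 - alpha) by (unfold nu, nu_alpha; field; lra).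
    assert (0 < nu) by (unfold nu, nu_alpha; apply Rdiv_lt_0_compat; lra).
    split; nra. }
  assert (HN : Nu nu) by (unfold Nu; lra).
  destruct (Nu_Mu' nu HN) as [H1 H2].
  exists (zs nu (n-1)), (zs (-nu) (n-1)).
  split. apply nth_zero; auto. split. apply nth_zero; auto.
  pose proof (gap_upper nu (n-1) HN). pose proof (gap_lower nu (n-1) HN). lra.
Qed.
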